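(* Let $\Gamma$ be a connected simple graph of connectivity $1$, and let $\Lambda_0$ be an arbitrary lobe of $\Gamma$. Let $\{P_i : i\in\mathbb{I}\}$ be the set of orbits of $\mathrm{Aut}(\Gamma)$ acting on $V\Gamma$. Let $S\le \mathrm{Aut}(\Gamma)$ be the setwise stabilizer of $\Lambda_0$, and let $\{Q_j : j\in\mathbb{J}\}$ be the set of orbits of $S$ on $V\Gamma$ that are contained in $V\Lambda_0$. For each $j\in\mathbb{J}$ let $P_{i_j}$ denote the orbit of $\mathrm{Aut}(\Gamma)$ containing $Q_j$. Then $\Gamma$ is lobe-transitive (i.e. $\mathrm{Aut}(\Gamma)$ acts transitively on the set $\mathscr{L}(\Gamma)$ of lobes) if and only if the following hold: (1) there is a family of graph isomorphisms $\sigma_\Lambda:\Lambda_0\to\Lambda$, one for each lobe $\Lambda\in\mathscr{L}(\Gamma)$, such that (2) for each $j\in\mathbb{J}$, the function $\tau_j:V\Gamma\to\mathbb{N}\cup\{0,\aleph_0\}$ defined by $$\tau_j(v)=\bigl|\{\Lambda\in\mathscr{L}(\Gamma): v\in\sigma_\Lambda(Q_j)\}\bigr|$$ satisfies (a) $\tau_j$ is constant on $P_i$ for every $i\in\mathbb{I}$, and (b) for all $v\in V\Gamma$, $\tau_j(v)>0$ if and only if $v\in P_{i_j}$ (i.e. $v$ lies in the $\mathrm{Aut}(\Gamma)$-orbit that contains the sets $\sigma_\Lambda(Q_j)$).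
   Context: All graphs are simple, connected, and finite or countably infinite (so vertex valences are finite or countably infinite). For edges $e_1,e_2$ of $\Gamma$ write $e_1\cong e_2$ if $e_1=e_2$ or $e_1,e_2$ lie on a common cycle; this is an equivalence relation on $E\Gamma$. A lobe of $\Gamma$ is the subgraph induced by an equivalence class (equivalently, a cut-edge with its two end-vertices, or a maximal biconnected subgraph). $\mathscr{L}(\Gamma)$ is the set of lobes. A vertex is a cut vertex if it lies in at least two lobes; a connected graph other than $K_2$ has connectivity $1$ iff it has a cut vertex. $\mathbb{N}$ denotes the positive integers. *)

(* Defs.v *)
From Stdlib Require Import List Arith Relations.
Import ListNotations.

Section Graphs.
Variable V : Type.
Variable adj : V -> V -> Prop.

Definition simple_graph : Prop :=
  (forall x y, adj x y -> adj y x) /\ (forall x, ~ adj x x).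

Definition connected : Prop :=
  forall x y, clos_refl_trans V adj x y.

Definition countable_vertices : Prop :=
  exists f : V -> nat, forall x y, f x = f y -> x = y.

Definition is_cycle (c : list V) : Prop :=
  3 <= length c /\ NoDup c /\
  forall i d, i < length c ->
    adj (nth i c d) (nth (S i mod length c) c d).

Definition edge_on_cycle (c : list V) (x y : V) : Prop :=
  exists i, i < length c /\
    ((nth i c x = x /\ nth (S i mod length c) c x = y) \/
     (nth i c x = y /\ nth (S i mod length c) c x = x)).

Definition edge_equiv (x1 y1 x2 y2 : V) : Prop :=
  ((x1 = x2 /\ y1 = y2) \/ (x1 = y2 /\ y1 = x2)) \/
  exists c, is_cycle c /\ edge_on_cycle c x1 y1 /\ edge_on_cycle c x2 y2.

(* A lobe is represented by its edge relation (symmetric): the equivalence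
   class of some edge {x,y}. Its vertex set is the set of end-vertices. *)
Definition is_lobe (L : V -> V -> Prop) : Prop :=
  exists x y, adj x y /\
    forall u w, L u w <-> (adj u w /\ edge_equiv x y u w).

Definition lobe_vertex (L : V -> V -> Prop) (v : V) : Prop :=
  exists w, L v w.

Definition has_cut_vertex : Prop :=
  exists v L1 L2, is_lobe L1 /\ is_lobe L2 /\ L1 <> L2 /\
    lobe_vertex L1 v /\ lobe_vertex L2 v.

Definition is_aut (f : V -> V) : Prop :=
  (forall y, exists x, f x = y) /\ (forall x y, f x = f y -> x = y) /\
  (forall x y, adj x y <-> adj (f x) (f y)).

Definition maps_lobe (f : V -> V) (L1 L2 : V -> V -> Prop) : Prop :=
  forall x y, L1 x y <-> L2 (f x) (f y).

Definition lobe_transitive : Prop :=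
  forall L1 L2, is_lobe L1 -> is_lobe L2 ->
    exists f, is_aut f /\ maps_lobe f L1 L2.

Definition lobe_iso (L1 L2 : V -> V -> Prop) (s : V -> V) : Prop :=
  (forall v, lobe_vertex L1 v -> lobe_vertex L2 (s v)) /\
  (forall v w, lobe_vertex L1 v -> lobe_vertex L1 w -> s v = s w -> v = w) /\
  (forall u, lobe_vertex L2 u -> exists v, lobe_vertex L1 v /\ s v = u) /\
  (forall v w, lobe_vertex L1 v -> lobe_vertex L1 w ->
     (L1 v w <-> L2 (s v) (s w))).

Definition aut_orbit (u v : V) : Prop :=
  exists f, is_aut f /\ f u = v.

Definition stab_orbit (L0 : V -> V -> Prop) (u v : V) : Prop :=
  exists g, is_aut g /\ maps_lobe g L0 L0 /\ g u = v.

End Graphs.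

Definition equinumerous {X : Type} (A B : X -> Prop) : Prop :=
  exists f : X -> X,
    (forall a, A a -> B (f a)) /\
    (forall a1 a2, A a1 -> A a2 -> f a1 = f a2 -> a1 = a2) /\
    (forall b, B b -> exists a, A a /\ f a = b).

(* For the S-orbit Q of q (q a vertex of L0), the set of lobes Λ with
   v ∈ σ_Λ(Q); τ_Q(v) is its cardinality. *)
Definition tau_set {V : Type} (adj : V -> V -> Prop) (L0 : V -> V -> Prop)
  (sigma : (V -> V -> Prop) -> V -> V) (q v : V) : (V -> V -> Prop) -> Prop :=
  fun L => is_lobe V adj L /\
    exists x, stab_orbit V adj L0 q x /\ sigma L x = v.

(* Main.v *)
Require Import Defs.
From Stdlib Require Import List Arith Lia Relations ClassicalEpsilon FunctionalExtensionality PropExtensionality Classical.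
Import ListNotations.


Section Lists.
Context {V : Type}.

Fixpoint chain (R : V -> V -> Prop) (l : list V) : Prop :=
  match l with
  | x :: ((y :: _) as t) => R x y /\ chain R t
  | _ => True
  end.

Definition ein (l : list V) (a b : V) := exists l1 l2, l = l1 ++ a :: b :: l2.

Lemma ein_cons l x a b : ein l a b -> ein (x :: l) a b.
Proof. intros (l1 & l2 & ->). exists (x :: l1), l2. reflexivity. Qed.

Lemma ein_app_r l m a b : ein m a b -> ein (l ++ m) a b.
Proof. intros (l1 & l2 & ->). exists (l ++ l1), l2. now rewrite app_assoc. Qed.

Lemma ein_app_l l m a b : ein l a b -> ein (l ++ m) a b.
Proof. intros (l1 & l2 & ->). exists l1, (l2 ++ m). now rewrite <- app_assoc. Qed.

Lemma ein_nil a b : ~ ein [] a b.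
Proof. intros (l1 & l2 & H). destruct l1; discriminate. Qed.

Lemma ein_single x a b : ~ ein [x] a b.
Proof. intros (l1 & l2 & H). destruct l1 as [|? [|]]; discriminate. Qed.

Lemma ein_cons2 x y t a b : ein (x :: y :: t) a b <-> (a = x /\ b = y) \/ ein (y :: t) a b.
Proof.
  split.
  - intros ([|z l1] & l2 & H); simpl in H; inversion H; subst.
    + left; auto.
    + right. exists l1, l2. auto.
  - intros [[-> ->]|H].
    + exists [], t. reflexivity.
    + now apply ein_cons.
Qed.

Lemma chain_ein R l : chain R l <-> forall a b, ein l a b -> R a b.
Proof.
  induction l as [|x [|y t] IH].
  - split; [intros _ a b H; now apply ein_nil in H| auto]. simpl; auto.
  - split; [intros _ a b H; now apply ein_single in H| simpl; auto].
  - simpl. split.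
    + intros [Hxy Hc] a b Hab. apply ein_cons2 in Hab as [[-> ->]|Hab]; auto.
      apply IH; auto.
    + intros H. split. apply H. exists [], t; reflexivity.
      apply IH. intros a b Hab. apply H. now apply ein_cons.
Qed.

Lemma ein_split p y q a b :
  ein (p ++ y :: q) a b <-> ein (p ++ [y]) a b \/ ein (y :: q) a b.
Proof.
  split.
  - revert y q. induction p as [|z p IH]; intros y q H.
    + right; exact H.
    + simpl in H. destruct p as [|w p].
      * simpl in H. apply ein_cons2 in H as [[-> ->]|H].
        -- left. exists [], []. reflexivity.
        -- right; exact H.
      * simpl in H. apply ein_cons2 in H as [[-> ->]|H].
        -- left. exists [], (p ++ [y]). reflexivity.
        -- destruct (IH y q H) as [H1|H1].
           ++ left. simpl. now apply ein_cons.
           ++ right; exact H1.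
  - intros [(l1 & l2 & H)|H].
    + exists l1, (l2 ++ q).
      replace (p ++ y :: q) with ((p ++ [y]) ++ q) by (now rewrite <- app_assoc).
      rewrite H. now rewrite <- app_assoc.
    + now apply ein_app_r.
Qed.

Lemma chain_split R p y q :
  chain R (p ++ y :: q) <-> chain R (p ++ [y]) /\ chain R (y :: q).
Proof.
  rewrite !chain_ein. split.
  - intros H. split; intros a b Hab; apply H, ein_split; auto.
  - intros [H1 H2] a b Hab. apply ein_split in Hab as [|]; auto.
Qed.

Lemma ein_rev l a b : ein (rev l) a b <-> ein l b a.
Proof.
  split.
  - intros (l1 & l2 & H). exists (rev l2), (rev l1).
    rewrite <- (rev_involutive l), H. rewrite rev_app_distr. simpl.
    now rewrite <- !app_assoc.
  - intros (l1 & l2 & ->). exists (rev l2), (rev l1).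
    rewrite rev_app_distr. simpl. now rewrite <- !app_assoc.
Qed.

Lemma chain_rev R l : (forall a b, R a b -> R b a) -> chain R l -> chain R (rev l).
Proof.
  intros Hs. rewrite !chain_ein. intros H a b Hab. apply (proj1 (ein_rev _ _ _)) in Hab. apply Hs, H, Hab.
Qed.

Lemma chain_mono (R R' : V -> V -> Prop) l : (forall a b, R a b -> R' a b) -> chain R l -> chain R' l.
Proof. rewrite !chain_ein. intros H1 H2 a b Hab. auto. Qed.

Lemma ein_in l a b : ein l a b -> In a l /\ In b l.
Proof. intros (l1 & l2 & ->). split; apply in_or_app; simpl; auto. Qed.

Lemma ein_map (f : V -> V) l a b : ein l a b -> ein (map f l) (f a) (f b).
Proof. intros (l1 & l2 & ->). exists (map f l1), (map f l2). now rewrite map_app. Qed.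

Lemma ein_map_inv (f : V -> V) l a b : ein (map f l) a b ->
  exists a' b', ein l a' b' /\ f a' = a /\ f b' = b.
Proof.
  induction l as [|x [|y t] IH]; simpl; intros H.
  - now apply ein_nil in H.
  - now apply ein_single in H.
  - apply ein_cons2 in H as [[-> ->]|H].
    + exists x, y. split; auto. exists [], t; reflexivity.
    + destruct (IH H) as (a' & b' & H1 & H2 & H3). exists a', b'. split; auto.
      now apply ein_cons.
Qed.

Lemma chain_map (R R' : V -> V -> Prop) (f : V -> V) l :
  (forall a b, R a b -> R' (f a) (f b)) -> chain R l -> chain R' (map f l).
Proof.
  rewrite !chain_ein. intros Hf H a b Hab.
  destruct (ein_map_inv f l a b Hab) as (a' & b' & H1 & <- & <-). auto.
Qed.

Lemma NoDup_app_iff (l1 l2 : list V) :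
  NoDup (l1 ++ l2) <-> NoDup l1 /\ NoDup l2 /\ (forall a, In a l1 -> ~ In a l2).
Proof.
  split.
  - intros H. split; [eapply NoDup_app_remove_r; eauto|].
    split; [eapply NoDup_app_remove_l; eauto|].
    induction l1 as [|x l1 IH]; simpl; [tauto|].
    inversion H; subst. intros a [->|Ha].
    + intros Hin. apply H2. apply in_or_app; auto.
    + apply IH; auto.
  - intros (H1 & H2 & H3). now apply NoDup_app.
Qed.

Lemma NoDup_cons_iff' (x : V) l : NoDup (x :: l) <-> ~ In x l /\ NoDup l.
Proof. split; intros H; [inversion H; auto | constructor; tauto]. Qed.

Lemma first_split (P : V -> Prop) l : (exists x, In x l /\ P x) ->
  exists A x B, l = A ++ x :: B /\ P x /\ forall y, In y A -> ~ P y.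
Proof.
  induction l as [|z l IH]; intros (x & Hx & Px); [destruct Hx|].
  destruct (classic (P z)) as [Pz|Pz].
  - exists [], z, l. split; [reflexivity|]. split; [exact Pz|]. intros y [].
  - destruct Hx as [->|Hx]; [contradiction|].
    destruct IH as (A & y & B & -> & Py & HA); [eauto|].
    exists (z :: A), y, B. split; auto. split; auto.
    intros w [->|Hw]; auto.
Qed.

Lemma last_split (P : V -> Prop) l : (exists x, In x l /\ P x) ->
  exists A x B, l = A ++ x :: B /\ P x /\ forall y, In y B -> ~ P y.
Proof.
  intros H. destruct (first_split P (rev l)) as (A & x & B & H1 & H2 & H3).
  { destruct H as (x & Hx & Px). exists x. split; auto. now apply in_rev in Hx. }
  exists (rev B), x, (rev A). split.
  - rewrite <- (rev_involutive l), H1. rewrite rev_app_distr. simpl. now rewrite <- app_assoc.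
  - split; auto. intros y Hy. apply H3. now apply in_rev.
Qed.

End Lists.

Ltac ndsimpl :=
  repeat (rewrite ?NoDup_app_iff, ?NoDup_cons_iff' in *; simpl in *;
          rewrite ?in_app_iff in *).


Section Cycles.
Context {V : Type} (adj : V -> V -> Prop).
Hypothesis Hsym : forall x y, adj x y -> adj y x.
Hypothesis Hirr : forall x, ~ adj x x.

Definition close (l : list V) := match l with [] => [] | x :: r => x :: r ++ [x] end.
Definition cyc (l : list V) := 3 <= length l /\ NoDup l /\ chain adj (close l).
Definition ce (l : list V) a b := ein (close l) a b \/ ein (close l) b a.
Definition cequiv (c c' : list V) :=
  (forall u w, ein (close c) u w <-> ein (close c') u w) /\ (forall x, In x c <-> In x c').

Lemma close_arcs a X b Y u w :
  ein (close (a :: X ++ b :: Y)) u w <-> ein (a :: X ++ [b]) u w \/ ein (b :: Y ++ [a]) u w.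
Proof.
  simpl. replace (a :: (X ++ b :: Y) ++ [a]) with ((a :: X) ++ b :: (Y ++ [a]))
    by (simpl; now rewrite <- app_assoc).
  rewrite ein_split. simpl. tauto.
Qed.

Lemma in_close c x : In x (close c) <-> In x c.
Proof.
  destruct c as [|y r]; simpl; [tauto|]. rewrite in_app_iff. simpl. intuition.
Qed.

Lemma cyc_rot p q : p <> [] -> q <> [] -> cyc (p ++ q) -> cyc (q ++ p) /\ cequiv (p ++ q) (q ++ p).
Proof.
  destruct p as [|a X]; [congruence|]. destruct q as [|b Y]; [congruence|]. intros _ _.
  assert (E : forall u w, ein (close ((a :: X) ++ b :: Y)) u w <-> ein (close ((b :: Y) ++ a :: X)) u w).
  { intros u w. simpl app. rewrite !close_arcs. tauto. }
  assert (I : forall x, In x ((a :: X) ++ b :: Y) <-> In x ((b :: Y) ++ a :: X)).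
  { intros x. rewrite !in_app_iff. tauto. }
  intros (H1 & H2 & H3). split; [|split; auto].
  split; [|split].
  - simpl in *. rewrite !length_app in *. simpl in *. lia.
  - apply NoDup_app_iff in H2 as (N1 & N2 & N3). apply NoDup_app_iff. split; [exact N2|]. split; [exact N1|].
    intros x Hx Hx'. exact (N3 x Hx' Hx).
  - rewrite chain_ein in *. intros u w Huw. apply H3, E, Huw.
Qed.

Lemma cequiv_refl c : cequiv c c.
Proof. split; intros; tauto. Qed.

Lemma cequiv_trans c1 c2 c3 : cequiv c1 c2 -> cequiv c2 c3 -> cequiv c1 c3.
Proof. intros [A B] [C D]. split; intros; [rewrite A, C|rewrite B, D]; tauto. Qed.

Lemma cyc_in_rot c a : cyc c -> In a c -> exists r, cyc (a :: r) /\ cequiv c (a :: r).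
Proof.
  intros Hc Ha. apply in_split in Ha as (l1 & l2 & ->).
  destruct l1 as [|z l1].
  - exists l2. split; auto. apply cequiv_refl.
  - destruct (cyc_rot (z :: l1) (a :: l2)) as [H1 H2]; try congruence; auto.
    exists (l2 ++ z :: l1). split; auto.
Qed.

Lemma cyc_two c a b : cyc c -> In a c -> In b c -> a <> b ->
  exists X Y, cyc (a :: X ++ b :: Y) /\ cequiv c (a :: X ++ b :: Y).
Proof.
  intros Hc Ha Hb Hab. destruct (cyc_in_rot c a Hc Ha) as (r & Hr & Heq).
  assert (Hbr : In b r). { apply Heq in Hb. destruct Hb; [congruence|auto]. }
  apply in_split in Hbr as (X & Y & ->). exists X, Y. auto.
Qed.

Lemma close_cons x r : close (x :: r) = (x :: r) ++ [x].
Proof. reflexivity. Qed.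

Lemma nil_or_last (l : list V) : l = [] \/ exists l' z, l = l' ++ [z].
Proof.
  destruct l as [|a l]; [auto|right]. destruct (exists_last (l := a :: l)) as (l' & z & H).
  congruence. eauto.
Qed.

Lemma rot_edge c s t : cyc c -> ein (close c) s t ->
  exists R, cyc (t :: R ++ [s]) /\ cequiv c (t :: R ++ [s]).
Proof.
  intros Hc (l1 & l2 & H).
  destruct c as [|x r]; [destruct Hc as [Hl _]; simpl in Hl; lia|].
  rewrite close_cons in H.
  destruct (nil_or_last l2) as [->|(l2' & z & ->)].
  - replace (l1 ++ [s; t]) with ((l1 ++ [s]) ++ [t]) in H by (now rewrite <- app_assoc).
    apply app_inj_tail in H as [H Heq]. subst x.
    destruct l1 as [|y l1].
    + simpl in H. inversion H; subst. destruct Hc as [Hl _]. simpl in Hl. lia.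
    + simpl in H. inversion H; subst. exists l1. split; auto. apply cequiv_refl.
  - replace (l1 ++ s :: t :: l2' ++ [z]) with ((l1 ++ s :: t :: l2') ++ [z]) in H
      by (now rewrite <- app_assoc).
    apply app_inj_tail in H as [H Heq]. rewrite H in Hc |- *.
    replace (l1 ++ s :: t :: l2') with ((l1 ++ [s]) ++ (t :: l2')) in Hc |- *
      by (now rewrite <- app_assoc).
    destruct (cyc_rot (l1 ++ [s]) (t :: l2')) as [H1 H2]; auto.
    + destruct l1; discriminate.
    + congruence.
    + exists (l2' ++ l1). rewrite <- app_assoc. simpl in H1, H2. split; auto.
Qed.

Lemma cyc_build a M b N :
  chain adj (a :: M ++ [b]) -> chain adj (b :: N ++ [a]) -> NoDup (a :: M ++ b :: N) ->
  (M <> [] \/ N <> []) -> cyc (a :: M ++ b :: N).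
Proof.
  intros H1 H2 H3 H4. split; [|split; auto].
  - simpl. rewrite length_app. simpl. destruct H4 as [H4|H4].
    + destruct M; [congruence|simpl]; lia.
    + destruct N; [congruence|simpl]; lia.
  - rewrite chain_ein in *. intros u w Huw. apply close_arcs in Huw as [|]; auto.
Qed.

Lemma ce_sym c a b : ce c a b -> ce c b a.
Proof. unfold ce; tauto. Qed.

Lemma ce_adj c a b : cyc c -> ce c a b -> adj a b.
Proof.
  intros (_ & _ & H) [Hab|Hab]; rewrite chain_ein in H; auto.
Qed.

Lemma ce_in c a b : ce c a b -> In a c /\ In b c.
Proof.
  intros [H|H]; apply ein_in in H as [H1 H2]; rewrite !in_close in *; auto.
Qed.

Lemma ce_cequiv c c' a b : cequiv c c' -> ce c a b -> ce c' a b.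
Proof. intros [E _] [H|H]; [left|right]; apply E; auto. Qed.


Lemma cequiv_sym c c' : cequiv c c' -> cequiv c' c.
Proof. intros [A B]. split; intros; [rewrite A|rewrite B]; tauto. Qed.

Lemma nd_helper (A B D : list V) x y : NoDup (A ++ x :: B ++ y :: D) -> NoDup (D ++ A).
Proof.
  intros H. apply NoDup_app_iff in H as (HA & H1 & H2).
  apply NoDup_cons_iff' in H1 as [_ H1]. apply NoDup_app_iff in H1 as (_ & H1 & H3).
  apply NoDup_cons_iff' in H1 as [_ HD].
  apply NoDup_app_iff. split; auto. split; auto.
  intros a Ha Ha'. apply (H2 a Ha'). right. apply in_or_app. right. right. exact Ha.
Qed.

Lemma rev_arc (a b : V) X : rev (a :: X ++ [b]) = b :: rev X ++ [a].
Proof. simpl. rewrite rev_app_distr. reflexivity. Qed.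

Lemma cyc_trans_aux c1 c2 x1 y1 x2 y2 s t :
  cyc c1 -> cyc c2 -> ce c1 x1 y1 -> ce c1 x2 y2 -> ce c2 x2 y2 -> ein (close c2) s t -> ~ ce c1 s t ->
  exists c, cyc c /\ ce c x1 y1 /\ ce c s t.
Proof.
  intros H1 H2 E1 E2 E2' Est Hn.
  destruct (rot_edge c2 s t H2 Est) as (R & Hl & Heq).
  remember (t :: R ++ [s]) as lin eqn:Hlin.
  assert (Hx2 : In x2 lin /\ In x2 c1 /\ In y2 lin /\ In y2 c1).
  { apply ce_in in E2 as [? ?]. apply ce_in in E2' as [? ?]. destruct Heq as [_ I].
    rewrite <- !I. auto. }
  assert (Hne : x2 <> y2). { intros Hxy. subst x2. apply (Hirr y2). exact (ce_adj c1 y2 y2 H1 E2). }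
  destruct (first_split (fun v => In v c1) lin) as (A & cj & Rest & HL & Hcj & HA).
  { exists x2. tauto. }
  assert (HR : exists z, In z Rest /\ In z c1).
  { destruct (classic (x2 = cj)) as [->|Hn2].
    - exists y2. split; [|tauto]. destruct Hx2 as (_ & _ & Hy & Hy').
      rewrite HL in Hy. apply in_app_iff in Hy as [Hy|[Hy|Hy]]; auto.
      + exfalso. exact (HA _ Hy Hy').
      + congruence.
    - exists x2. split; [|tauto]. destruct Hx2 as (Hy & Hy' & _).
      rewrite HL in Hy. apply in_app_iff in Hy as [Hy|[Hy|Hy]]; auto.
      + exfalso. exact (HA _ Hy Hy').
      + congruence. }
  destruct (last_split (fun v => In v c1) Rest HR) as (B & ci & D & HR' & Hci & HD).
  subst Rest.
  assert (Hnd : NoDup lin) by apply Hl.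
  rewrite HL in Hnd.
  assert (Hij : ci <> cj).
  { intros ->. apply NoDup_app_iff in Hnd as (_ & Hnd & _).
    apply NoDup_cons_iff' in Hnd as [Hnd _]. apply Hnd. apply in_or_app. right. left. auto. }
  destruct (cyc_two c1 ci cj H1 Hci Hcj Hij) as (X & Y & HC & HCeq).
  assert (HCnd : NoDup (ci :: X ++ cj :: Y)) by apply HC.
  assert (HCch : forall u w, ein (ci :: X ++ [cj]) u w \/ ein (cj :: Y ++ [ci]) u w -> adj u w).
  { intros u w Huw. destruct HC as (_ & _ & Hch). rewrite chain_ein in Hch. apply Hch.
    apply close_arcs. exact Huw. }
  assert (HY : exists Y', chain adj (cj :: Y' ++ [ci]) /\
     (ein (cj :: Y' ++ [ci]) x1 y1 \/ ein (cj :: Y' ++ [ci]) y1 x1) /\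
     NoDup (ci :: cj :: Y') /\ (forall y, In y Y' -> In y c1) /\ (Y' = [] -> ce c1 ci cj)).
  { assert (E1' : ce (ci :: X ++ cj :: Y) x1 y1) by (eapply ce_cequiv; eauto).
    assert (HCnd' := HCnd). apply NoDup_cons_iff' in HCnd' as [Hci' HCnd'].
    apply NoDup_app_iff in HCnd' as (HXnd & HYnd & HXY).
    destruct (classic (ein (cj :: Y ++ [ci]) x1 y1 \/ ein (cj :: Y ++ [ci]) y1 x1)) as [HY|HY].
    - exists Y. split; [|split; [exact HY|split; [|split]]].
      + apply chain_ein. intros u w Huw. apply HCch. auto.
      + constructor. { intros [|]; [congruence|]. apply Hci'. apply in_or_app. right. right. auto. }
        exact HYnd.
      + intros y Hy. apply HCeq. right. apply in_or_app. right. right. exact Hy.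
      + intros ->. eapply ce_cequiv; [apply cequiv_sym; eauto|]. right. apply close_arcs. right.
        exists [], []. reflexivity.
    - exists (rev X). assert (HX : ein (ci :: X ++ [cj]) x1 y1 \/ ein (ci :: X ++ [cj]) y1 x1).
      { destruct E1' as [E|E]; apply close_arcs in E; tauto. }
      split; [|split; [|split; [|split]]].
      + rewrite <- rev_arc. apply chain_rev; auto. apply chain_ein. intros u w Huw. apply HCch. auto.
      + rewrite <- rev_arc. rewrite !ein_rev. tauto.
      + constructor.
        * intros [|Hin]; [congruence|]. apply Hci'. apply in_or_app. left. now apply in_rev.
        * constructor; [|now apply NoDup_rev]. intros Hin. apply in_rev in Hin.
          apply (HXY cj Hin). left. auto.
      + intros y Hy. apply HCeq. right. apply in_or_app. left. now apply in_rev.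
      + intros HX0. destruct X as [|x0 X]; [|simpl in HX0; destruct (rev X); discriminate].
        eapply ce_cequiv; [apply cequiv_sym; eauto|]. left. apply close_arcs. left.
        exists [], []. reflexivity. }
  destruct HY as (Y' & HY1 & HY2 & HY3 & HY4 & HY5).
  assert (HK : exists K, ci :: D = K ++ [s]).
  { destruct (nil_or_last (ci :: D)) as [H0|(K & z & HK)]; [discriminate|].
    exists K. rewrite HK. rewrite HK, Hlin in HL.
    replace (A ++ cj :: B ++ K ++ [z]) with ((A ++ cj :: B ++ K) ++ [z]) in HL
      by (rewrite <- app_assoc; simpl; now rewrite <- app_assoc).
    replace (t :: R ++ [s]) with ((t :: R) ++ [s]) in HL by reflexivity.
    apply app_inj_tail in HL as [_ ->]. reflexivity. }
  assert (HA' : exists A', A ++ [cj] = t :: A').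
  { destruct A as [|a0 A].
    - exists []. rewrite Hlin in HL. simpl in HL. inversion HL. reflexivity.
    - exists (A ++ [cj]). rewrite Hlin in HL. simpl in HL. inversion HL. reflexivity. }
  destruct HK as (K & HK). destruct HA' as (A' & HA').
  assert (HP : ci :: (D ++ A) ++ [cj] = K ++ s :: t :: A').
  { rewrite <- app_assoc. rewrite app_comm_cons. rewrite HK, HA'. rewrite <- app_assoc. reflexivity. }
  assert (HclL : close lin = A ++ cj :: B ++ ci :: D ++ [t]).
  { rewrite Hlin. rewrite close_cons. rewrite <- Hlin. rewrite HL.
    rewrite <- app_assoc. simpl. rewrite <- app_assoc. reflexivity. }
  assert (HPc : chain adj (ci :: (D ++ A) ++ [cj])).
  { rewrite HP. apply chain_ein. intros u w Huw. destruct Hl as (_ & _ & Hch).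
    rewrite chain_ein in Hch. apply Hch.
    apply ein_split in Huw as [Huw|Huw].
    - rewrite <- HK in Huw. rewrite HclL.
      replace (A ++ cj :: B ++ ci :: D ++ [t]) with ((A ++ cj :: B) ++ ((ci :: D) ++ [t]))
        by (rewrite <- app_assoc; reflexivity).
      apply ein_app_r, ein_app_l, Huw.
    - apply ein_cons2 in Huw as [[-> ->]|Huw].
      + rewrite Hlin, close_cons. exists (t :: R), []. simpl. rewrite <- app_assoc. reflexivity.
      + rewrite <- HA' in Huw. rewrite HclL.
        replace (A ++ cj :: B ++ ci :: D ++ [t]) with ((A ++ [cj]) ++ (B ++ ci :: D ++ [t]))
          by (rewrite <- app_assoc; reflexivity).
        apply ein_app_l, Huw. }
  assert (HPe : ein (ci :: (D ++ A) ++ [cj]) s t). { rewrite HP. exists K, A'. reflexivity. }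
  assert (HDA : forall y, In y (D ++ A) -> ~ In y c1).
  { intros y Hy. apply in_app_iff in Hy as [|]; [apply HD|apply HA]; auto. }
  assert (HDAnd : NoDup (D ++ A)) by (eapply nd_helper; eauto).
  assert (Hcyc : cyc (ci :: (D ++ A) ++ cj :: Y')).
  { apply cyc_build; auto.
    - apply NoDup_cons_iff' in HY3 as [HY3a HY3b].
      constructor.
      + intros Hin. apply in_app_iff in Hin as [Hin|[Hin|Hin]].
        * exact (HDA _ Hin Hci).
        * congruence.
        * apply HY3a. right. exact Hin.
      + apply NoDup_app_iff. split; auto. split; auto.
        intros a Ha [Ha'|Ha'].
        * subst a. exact (HDA _ Ha Hcj).
        * exact (HDA _ Ha (HY4 _ Ha')).
    - destruct (classic (D ++ A = [])) as [E|E]; [|auto].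
      destruct (classic (Y' = [])) as [E'|E']; [|auto].
      exfalso. rewrite E in HPe. simpl in HPe.
      apply ein_cons2 in HPe as [[-> ->]|HPe]; [|now apply ein_single in HPe].
      apply Hn. apply HY5. exact E'. }
  exists (ci :: (D ++ A) ++ cj :: Y'). split; [exact Hcyc|]. split.
  - destruct HY2; [left|right]; apply close_arcs; right; auto.
  - left. apply close_arcs. left. exact HPe.
Qed.

Definition EE (x1 y1 x2 y2 : V) : Prop :=
  ((x1 = x2 /\ y1 = y2) \/ (x1 = y2 /\ y1 = x2)) \/
  exists c, cyc c /\ ce c x1 y1 /\ ce c x2 y2.

Lemma EE_refl x y : EE x y x y.
Proof. left; left; auto. Qed.

Lemma EE_sym a b c d : EE a b c d -> EE c d a b.
Proof.
  intros [[[-> ->]|[-> ->]]|(cy & H1 & H2 & H3)]; [left; left; auto|left; right; auto|].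
  right. exists cy. auto.
Qed.

Lemma EE_swap a b c d : EE a b c d -> EE b a c d.
Proof.
  intros [[[-> ->]|[-> ->]]|(cy & H1 & H2 & H3)]; [left; right; auto|left; left; auto|].
  right. exists cy. split; auto. split; auto. now apply ce_sym.
Qed.

Lemma EE_trans x1 y1 x2 y2 x3 y3 : EE x1 y1 x2 y2 -> EE x2 y2 x3 y3 -> EE x1 y1 x3 y3.
Proof.
  intros H12 H23.
  destruct H12 as [[[-> ->]|[-> ->]]|(c1 & C1 & A1 & A2)]; [exact H23|now apply EE_swap|].
  destruct H23 as [[[<- <-]|[<- <-]]|(c2 & C2 & B2 & B3)].
  - right. exists c1. auto.
  - right. exists c1. split; auto. split; auto. now apply ce_sym.
  - right. destruct (classic (ce c1 x3 y3)) as [Hc|Hc]; [exists c1; auto|].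
    destruct B3 as [B3|B3].
    + destruct (cyc_trans_aux c1 c2 x1 y1 x2 y2 x3 y3) as (c & ? & ? & ?); auto.
      exists c; auto.
    + destruct (cyc_trans_aux c1 c2 x1 y1 x2 y2 y3 x3) as (c & ? & ? & ?); auto.
      { intros Hc'. apply Hc. now apply ce_sym. }
      exists c. split; auto. split; auto. now apply ce_sym.
Qed.

End Cycles.


Section Conv.
Context {V : Type} (adj : V -> V -> Prop).

Lemma ein_nth (l : list V) a b : ein l a b <->
  exists i, S i < length l /\ forall d, nth i l d = a /\ nth (S i) l d = b.
Proof.
  induction l as [|x [|y t] IH].
  - split; [intros H; now apply ein_nil in H|]. intros (i & Hi & _). simpl in Hi; lia.
  - split; [intros H; now apply ein_single in H|]. intros (i & Hi & _). simpl in Hi; lia.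
  - rewrite ein_cons2, IH. split.
    + intros [[-> ->]|(i & Hi & H)].
      * exists 0. simpl. split; [lia|auto].
      * exists (S i). simpl in *. split; [lia|]. intros d. apply H.
    + intros ([|i] & Hi & H).
      * left. destruct (H x) as [H1 H2]. simpl in *. auto.
      * right. exists i. simpl in *. split; [lia|]. intros d. apply H.
Qed.

Lemma chain_nth R (l : list V) : chain R l <->
  forall i d, S i < length l -> R (nth i l d) (nth (S i) l d).
Proof.
  rewrite chain_ein. split.
  - intros H i d Hi. apply H. apply ein_nth. exists i. split; [exact Hi|].
    intros d'. split; apply nth_indep; lia.
  - intros H a b Hab. apply ein_nth in Hab as (i & Hi & Hab).
    pose proof (H i a Hi) as HR. destruct (Hab a) as [E1 E2]. rewrite E1, E2 in HR. exact HR.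
Qed.

Lemma close_nth (c : list V) i d d' : c <> [] -> i < length c ->
  nth i (close c) d = nth i c d' /\ nth (S i) (close c) d = nth (S i mod length c) c d'.
Proof.
  intros Hc Hi. destruct c as [|x r]; [congruence|]. rewrite close_cons. split.
  - rewrite app_nth1 by auto. apply nth_indep; auto.
  - destruct (Nat.eq_dec (S i) (length (x :: r))) as [E|E].
    + rewrite E, Nat.Div0.mod_same by (simpl; lia). rewrite nth_middle. reflexivity.
    + rewrite Nat.mod_small by lia. rewrite app_nth1 by lia. apply nth_indep; lia.
Qed.

Lemma length_close (c : list V) : length (close c) = match c with [] => 0 | _ => S (length c) end.
Proof. destruct c; simpl; auto. rewrite length_app. simpl. lia. Qed.

Lemma is_cycle_cyc (c : list V) : is_cycle V adj c <-> cyc adj c.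
Proof.
  unfold is_cycle, cyc. split; intros (H1 & H2 & H3); split; auto; split; auto.
  - assert (Hc : c <> []) by (destruct c; simpl in *; [lia|congruence]).
    apply chain_nth. intros i d Hi. rewrite length_close in Hi. destruct c as [|x r]; [congruence|].
    destruct (close_nth (x :: r) i d d Hc) as [E1 E2]; [lia|]. rewrite E1, E2. apply H3. lia.
  - assert (Hc : c <> []) by (destruct c; simpl in *; [lia|congruence]).
    intros i d Hi. rewrite chain_nth in H3.
    destruct (close_nth c i d d Hc Hi) as [E1 E2]. rewrite <- E1, <- E2. apply H3.
    rewrite length_close. destruct c; [congruence|]. simpl in *. lia.
Qed.

Lemma edge_on_cycle_ce (c : list V) x y : c <> [] -> (edge_on_cycle V c x y <-> ce c x y).
Proof.
  intros Hc. unfold edge_on_cycle, ce. rewrite !ein_nth. split.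
  - intros (i & Hi & H). destruct (close_nth c i x x Hc Hi) as [E1 E2].
    assert (Hl : S i < length (close c)) by (rewrite length_close; destruct c; [congruence|simpl in *; lia]).
    destruct H as [[H1 H2]|[H1 H2]]; [left|right]; exists i; split; auto; intros d;
      destruct (close_nth c i d x Hc Hi) as [F1 F2]; rewrite F1, F2; auto.
  - intros [(i & Hi & H)|(i & Hi & H)];
    (assert (Hi' : i < length c) by (rewrite length_close in Hi; destruct c; [congruence|simpl in *; lia]));
    exists i; split; auto; destruct (close_nth c i x x Hc Hi') as [E1 E2]; destruct (H x) as [H1 H2];
    rewrite <- E1, <- E2; auto.
Qed.

Lemma edge_equiv_EE x1 y1 x2 y2 : edge_equiv V adj x1 y1 x2 y2 <-> EE adj x1 y1 x2 y2.
Proof.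
  unfold edge_equiv, EE. split; intros [H|(c & H1 & H2 & H3)]; try (left; exact H); right; exists c;
  (assert (Hc : c <> []) by (intros ->; first [apply is_cycle_cyc in H1|idtac]; destruct H1 as [Hl _]; simpl in Hl; lia)).
  - apply is_cycle_cyc in H1. apply edge_on_cycle_ce in H2, H3; auto.
  - apply is_cycle_cyc in H1. apply edge_on_cycle_ce in H2, H3; auto.
Qed.

End Conv.


Lemma crt_sym {V} (R : V -> V -> Prop) a b : (forall x y, R x y -> R y x) ->
  clos_refl_trans V R a b -> clos_refl_trans V R b a.
Proof.
  intros Hs H. induction H; [apply rt_step; auto|apply rt_refl|eapply rt_trans; eauto].
Qed.

Lemma crt_mono {V} (R R' : V -> V -> Prop) a b : (forall x y, R x y -> R' x y) ->
  clos_refl_trans V R a b -> clos_refl_trans V R' a b.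
Proof.
  intros Hs H. induction H; [apply rt_step; auto|apply rt_refl|eapply rt_trans; eauto].
Qed.

Lemma path_extract {V} (R : V -> V -> Prop) a b : clos_refl_trans V R a b -> a <> b ->
  exists l, NoDup (a :: l ++ [b]) /\ chain R (a :: l ++ [b]).
Proof.
  intros H. apply clos_rt_rt1n in H. induction H as [a|a a' b Ha H IH]; [congruence|].
  intros Hab. destruct (classic (a' = b)) as [->|Hab'].
  - exists []. simpl. split; [|auto]. constructor; [intros [|[]]; congruence|].
    constructor; [intros []|constructor].
  - destruct (IH Hab') as (l' & Hnd & Hch).
    destruct (classic (In a (a' :: l'))) as [Hin|Hin].
    + apply in_split in Hin as (l1 & l2 & Hl). exists l2.
      change (a' :: l' ++ [b]) with ((a' :: l') ++ [b]) in Hnd, Hch.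
      rewrite Hl in Hnd, Hch. rewrite <- app_assoc in Hnd, Hch. simpl in Hnd, Hch.
      split; [eapply NoDup_app_remove_l; eauto|].
      apply chain_split in Hch as [_ Hch]. exact Hch.
    + exists (a' :: l'). split.
      * constructor; auto. simpl. intros [->|Hin']; [apply Hin; left; auto|].
        apply in_app_iff in Hin' as [Hin'|[Hin'|[]]]; [apply Hin; right; auto|congruence].
      * simpl. split; auto.
Qed.

Lemma chain_conn {V} (R : V -> V -> Prop) l a b : (forall x y, R x y -> R y x) ->
  chain R l -> In a l -> In b l -> clos_refl_trans V R a b.
Proof.
  intros Hs. revert a b.
  assert (Hhd : forall l x, chain R (x :: l) -> forall a, In a (x :: l) -> clos_refl_trans V R x a).
  { induction l0 as [|y t IH]; intros x Hc a Ha.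
    - destruct Ha as [->|[]]. apply rt_refl.
    - destruct Ha as [->|Ha]; [apply rt_refl|]. destruct Hc as [Hxy Hc].
      eapply rt_trans; [apply rt_step, Hxy|]. apply IH; auto. }
  intros a b Hc Ha Hb. destruct l as [|x t]; [destruct Ha|].
  eapply rt_trans; [apply crt_sym; auto; apply (Hhd t x Hc a Ha)|]. apply (Hhd t x Hc b Hb).
Qed.

Lemma ein_exists {V} (x : V) l : l <> [] -> exists y, ein (x :: l) x y.
Proof. destruct l as [|y t]; [congruence|]. intros _. exists y, [], t. reflexivity. Qed.

Section Lobes.
Context {V : Type} (adj : V -> V -> Prop).
Hypothesis Hsym : forall x y, adj x y -> adj y x.
Hypothesis Hirr : forall x, ~ adj x x.

Definition lobeOf (u w : V) : V -> V -> Prop := fun a b => adj a b /\ EE adj u w a b.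

Lemma lobe_char L : is_lobe V adj L <-> exists x y, adj x y /\ forall u w, L u w <-> adj u w /\ EE adj x y u w.
Proof.
  unfold is_lobe. split; intros (x & y & H1 & H2); exists x, y; split; auto; intros u w;
  rewrite H2, edge_equiv_EE; tauto.
Qed.

Lemma lobe_adj L a b : is_lobe V adj L -> L a b -> adj a b.
Proof. intros HL H. apply lobe_char in HL as (x & y & _ & H2). apply H2 in H. tauto. Qed.

Lemma lobe_sym L a b : is_lobe V adj L -> L a b -> L b a.
Proof.
  intros HL H. apply lobe_char in HL as (x & y & _ & H2). apply H2 in H as [H3 H4].
  apply H2. split; auto. apply EE_sym, EE_swap, EE_sym. auto.
Qed.

Lemma lobeOf_lobe a b : adj a b -> is_lobe V adj (lobeOf a b) /\ lobeOf a b a b.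
Proof.
  intros H. split; [|split; auto; apply EE_refl].
  apply lobe_char. exists a, b. split; auto. intros u w. unfold lobeOf. tauto.
Qed.

Lemma lobe_eq L a b : is_lobe V adj L -> L a b -> L = lobeOf a b.
Proof.
  intros HL H. apply lobe_char in HL as (x & y & H1 & H2).
  assert (E : EE adj x y a b) by (apply H2 in H; tauto).
  apply functional_extensionality. intros u. apply functional_extensionality. intros w.
  apply propositional_extensionality. rewrite H2. unfold lobeOf. split; intros [A B]; split; auto.
  - eapply EE_trans; eauto. apply EE_sym; auto.
  - eapply EE_trans; eauto.
Qed.

Lemma lobe_share L L' a b : is_lobe V adj L -> is_lobe V adj L' -> L a b -> L' a b -> L = L'.
Proof.
  intros H1 H2 H3 H4. rewrite (lobe_eq L a b), (lobe_eq L' a b); auto.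
Qed.

Lemma lobe_conn L a b : is_lobe V adj L -> lobe_vertex V L a -> lobe_vertex V L b ->
  clos_refl_trans V L a b.
Proof.
  intros HL [a' Ha] [b' Hb].
  assert (HL' := HL). apply lobe_char in HL' as (x & y & H1 & H2).
  assert (Hxy : L x y) by (apply H2; split; auto; apply EE_refl).
  assert (K : forall c c', L c c' -> clos_refl_trans V L c x).
  { intros c c' Hc. apply H2 in Hc as [Hc1 Hc2].
    destruct Hc2 as [[[<- <-]|[<- <-]]|(cy & Hcy & Ce1 & Ce2)].
    - apply rt_refl.
    - apply rt_step. apply lobe_sym; auto.
    - assert (Hch : chain L (close cy)).
      { apply chain_ein. intros u w Huw. apply H2. split.
        - destruct Hcy as (_ & _ & Hch). rewrite chain_ein in Hch. auto.
        - right. exists cy. split; auto. split; auto. left; auto. }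
      apply (chain_conn L (close cy)); auto.
      + intros; apply lobe_sym; auto.
      + apply in_close. apply (ce_in cy c c' Ce2).
      + apply in_close. apply (ce_in cy x y Ce1). }
  eapply rt_trans; [apply (K a a' Ha)|]. apply crt_sym; [intros; apply lobe_sym; auto|].
  apply (K b b' Hb).
Qed.

Lemma chain_lv L x l : is_lobe V adj L -> chain L (x :: l) -> l <> [] ->
  forall u, In u (x :: l) -> lobe_vertex V L u.
Proof.
  intros HL. revert x. induction l as [|y t IH]; intros x Hc Hne u Hu; [congruence|].
  destruct Hc as [Hxy Hc]. destruct Hu as [->|Hu].
  - exists y; auto.
  - destruct t as [|z t].
    + destruct Hu as [->|[]]. exists x. apply lobe_sym; auto.
    + apply (IH y Hc); auto. congruence.
Qed.

Definition avoid (L : V -> V -> Prop) := fun u w => adj u w /\ ~ L u w.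

Lemma separation L a b : is_lobe V adj L -> lobe_vertex V L a -> lobe_vertex V L b -> a <> b ->
  ~ clos_refl_trans V (avoid L) a b.
Proof.
  intros HL Ha Hb Hab Hc.
  destruct (path_extract _ a b Hc Hab) as (l & Hnd & Hch).
  destruct (first_split (lobe_vertex V L) (l ++ [b])) as (A & z & Rest & HE & Hz & HA).
  { exists b. split; auto. apply in_or_app. right. left. auto. }
  rewrite HE in Hnd, Hch.
  change (chain (avoid L) ((a :: A) ++ z :: Rest)) in Hch.
  apply chain_split in Hch as [Hch1 _].
  assert (Haz : a <> z).
  { intros ->. apply NoDup_cons_iff' in Hnd as [Hnd _]. apply Hnd. apply in_or_app. right. left. auto. }
  destruct (path_extract L z a (lobe_conn L z a HL Hz Ha)) as (Q & HQnd & HQch); [auto|].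
  assert (HQlv : forall u, In u (z :: Q ++ [a]) -> lobe_vertex V L u).
  { apply chain_lv; auto. destruct Q; discriminate. }
  assert (Hcy : cyc adj (a :: A ++ z :: Q)).
  { apply cyc_build; auto.
    - eapply chain_mono; [|exact Hch1]. intros u w [H _]; auto.
    - eapply chain_mono; [|exact HQch]. intros u w H. eapply lobe_adj; eauto.
    - apply NoDup_cons_iff' in Hnd as [Hnd1 Hnd2].
      apply NoDup_cons_iff' in HQnd as [HQ1 HQ2]. apply NoDup_app_iff in HQ2 as (HQ3 & _ & HQ4).
      constructor.
      + intros Hin. apply in_app_iff in Hin as [Hin|[Hin|Hin]].
        * apply Hnd1. apply in_or_app. left; auto.
        * congruence.
        * exact (HQ4 a Hin (or_introl eq_refl)).
      + apply NoDup_app_iff in Hnd2 as (HA1 & HA2 & HA3). apply NoDup_app_iff. split; auto.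
        split; [constructor; auto; intros Hin; apply HQ1; apply in_or_app; auto|].
        intros u Hu [<-|Hu'].
        * exact (HA _ Hu Hz).
        * apply (HA _ Hu). apply HQlv. right. apply in_or_app. left. auto.
    - destruct (classic (A = [])) as [->|E]; [|auto].
      destruct (classic (Q = [])) as [->|E']; [|auto]. exfalso.
      simpl in Hch1, HQch. destruct Hch1 as [[_ H1] _]. destruct HQch as [H2 _].
      apply H1. apply lobe_sym; auto. }
  destruct (ein_exists a (A ++ [z])) as (h & Hh); [destruct A; discriminate|].
  destruct (ein_exists z (Q ++ [a])) as (k & Hk); [destruct Q; discriminate|].
  assert (Hah : avoid L a h) by (rewrite chain_ein in Hch1; apply Hch1; auto).
  assert (Hzk : L z k) by (rewrite chain_ein in HQch; apply HQch; auto).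
  assert (E : EE adj z k a h).
  { right. exists (a :: A ++ z :: Q). split; auto. split; left; apply close_arcs; auto. }
  destruct Hah as [Hah1 Hah2]. apply Hah2.
  apply lobe_char in HL as (x & y & H1 & H2). apply H2. split; auto.
  apply H2 in Hzk as [_ Hzk]. eapply EE_trans; eauto.
Qed.

End Lobes.


Lemma nat_min (P : nat -> Prop) : (exists n, P n) -> exists n, P n /\ forall m, P m -> n <= m.
Proof.
  intros [n Hn]. revert Hn. induction n as [n IH] using lt_wf_ind. intros Hn.
  destruct (classic (exists m, m < n /\ P m)) as [(m & Hm & Pm)|H].
  - exact (IH m Hm Pm).
  - exists n. split; auto. intros m Pm. destruct (Nat.lt_ge_cases m n); auto.
    exfalso. apply H. eauto.
Qed.

Section Tree.
Context {V : Type} (adj : V -> V -> Prop).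
Hypothesis Hsym : forall x y, adj x y -> adj y x.
Hypothesis Hirr : forall x, ~ adj x x.
Hypothesis Hconn : connected V adj.
Variable R : V -> V -> Prop.
Hypothesis HR : is_lobe V adj R.

Notation lobe := (is_lobe V adj).
Notation lv := (lobe_vertex V).

Fixpoint nst (n : nat) (v r : V) : Prop :=
  match n with 0 => v = r | S n => exists w, adj v w /\ nst n w r end.

Definition dto n v := exists r, lv R r /\ nst n v r.

Lemma R_vertex : exists r, lv R r.
Proof. apply lobe_char in HR as (x & y & H1 & H2). exists x, y. apply H2. split; auto. apply EE_refl. Qed.

Lemma dto_ex v : exists n, dto n v.
Proof.
  destruct R_vertex as (r & Hr). assert (H := Hconn v r). apply clos_rt_rt1n in H.
  induction H as [v|v w r Hvw H IH].
  - exists 0, v. simpl; auto.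
  - destruct (IH Hr) as (n & r' & Hr' & Hn). exists (S n), r'. split; auto. exists w. auto.
Qed.

Lemma dmin_ex v : exists n, dto n v /\ forall m, dto m v -> n <= m.
Proof. apply nat_min, dto_ex. Qed.

Definition dl v := proj1_sig (constructive_indefinite_description _ (dmin_ex v)).

Lemma dl_spec v : dto (dl v) v /\ forall m, dto m v -> dl v <= m.
Proof. unfold dl. destruct (constructive_indefinite_description _ _) as (n & Hn). exact Hn. Qed.

Lemma dl_zero v : dl v = 0 <-> lv R v.
Proof.
  split.
  - intros H. destruct (dl_spec v) as [(r & Hr & Hn) _]. rewrite H in Hn. simpl in Hn. now subst.
  - intros H. destruct (dl_spec v) as [_ Hm]. assert (dl v <= 0) by (apply Hm; exists v; simpl; auto). lia.
Qed.

Lemma dl_adj u w : adj u w -> dl u <= S (dl w).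
Proof.
  intros H. destruct (dl_spec w) as [(r & Hr & Hn) _]. apply (proj2 (dl_spec u)).
  exists r. split; auto. exists w. auto.
Qed.

Lemma dl_step v : 0 < dl v -> exists w, adj v w /\ S (dl w) = dl v.
Proof.
  intros H. destruct (dl_spec v) as [(r & Hr & Hn) _].
  destruct (dl v) as [|k] eqn:E; [lia|]. destruct Hn as (w & Hw & Hn).
  exists w. split; auto. assert (dl w <= k) by (apply (proj2 (dl_spec w)); exists r; auto).
  assert (dl v <= S (dl w)) by (apply dl_adj; auto). lia.
Qed.

Lemma p_ex (L : V -> V -> Prop) : exists p, lobe L -> lv L p /\ forall w, lv L w -> dl p <= dl w.
Proof.
  destruct (classic (lobe L)) as [HL|HL].
  - assert (Hv : exists x, lv L x).
    { apply lobe_char in HL as (x & y & H1 & H2). exists x, y. apply H2. split; auto. apply EE_refl. }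
    destruct (nat_min (fun n => exists x, lv L x /\ dl x = n)) as (n & (p & Hp & <-) & Hmin).
    { destruct Hv as (x & Hx). eauto. }
    exists p. intros _. split; auto. intros w Hw. apply Hmin. eauto.
  - destruct R_vertex as (r & _). exists r. tauto.
Qed.

Definition pR L := proj1_sig (constructive_indefinite_description _ (p_ex L)).

Lemma pR_spec L : lobe L -> lv L (pR L) /\ forall w, lv L w -> dl (pR L) <= dl w.
Proof. unfold pR. destruct (constructive_indefinite_description _ _) as (p & Hp). exact Hp. Qed.

Lemma par_ex v : exists P, lobe P /\ lv P v /\ (dl v = 0 -> P = R) /\
  (0 < dl v -> exists w, P v w /\ S (dl w) = dl v).
Proof.
  destruct (Nat.eq_dec (dl v) 0) as [E|E].
  - exists R. split; auto. split; [apply dl_zero; auto|]. split; auto. lia.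
  - destruct (dl_step v) as (w & Hw & Hd); [lia|].
    destruct (lobeOf_lobe adj v w Hw) as [H1 H2].
    exists (lobeOf adj v w). split; auto. split; [exists w; auto|]. split; [lia|]. eauto.
Qed.

Definition parR v := proj1_sig (constructive_indefinite_description _ (par_ex v)).

Lemma parR_spec v : lobe (parR v) /\ lv (parR v) v /\ (dl v = 0 -> parR v = R) /\
  (0 < dl v -> exists w, parR v v w /\ S (dl w) = dl v).
Proof. unfold parR. destruct (constructive_indefinite_description _ _) as (p & Hp). exact Hp. Qed.

Lemma lv_sym L a b : lobe L -> L a b -> lv L a /\ lv L b.
Proof. intros HL H. split; [exists b; auto|exists a; apply (lobe_sym adj Hsym); auto]. Qed.

Lemma avoid_sym L a b : lobe L -> clos_refl_trans V (avoid adj L) a b -> clos_refl_trans V (avoid adj L) b a.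
Proof.
  intros HL. apply crt_sym. intros x y [H1 H2]. split; auto. intros H. apply H2. apply (lobe_sym adj Hsym); auto.
Qed.

Lemma R_avoid L a b : lobe L -> L <> R -> lv R a -> lv R b -> clos_refl_trans V (avoid adj L) a b.
Proof.
  intros HL HLR Ha Hb. apply (crt_mono R); [|apply (lobe_conn adj Hsym R a b HR Ha Hb)].
  intros x y H. split; [exact (lobe_adj adj R x y HR H)|]. intros H'. apply HLR.
  eapply lobe_share; eauto.
Qed.

Lemma K_lemma L : lobe L -> forall n y, dl y = n -> n <= dl (pR L) ->
  exists r, lv R r /\ clos_refl_trans V (avoid adj L) y r.
Proof.
  intros HL n. induction n as [|n IH]; intros y Hy Hn.
  - exists y. split; [apply dl_zero; auto|apply rt_refl].
  - destruct (dl_step y) as (w & Hw & Hd); [lia|].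
    destruct (IH w) as (r & Hr & Hc); [lia|lia|].
    exists r. split; auto. eapply rt_trans; [|exact Hc]. apply rt_step. split; auto.
    intros Hyw. destruct (pR_spec L HL) as [_ Hmin].
    assert (dl (pR L) <= dl w) by (apply Hmin; exact (proj2 (lv_sym L y w HL Hyw))). lia.
Qed.

Lemma G_lemma L a : lobe L -> L <> R -> lv L a -> a <> pR L ->
  forall x, dl x < dl a -> ~ clos_refl_trans V (avoid adj L) a x.
Proof.
  intros HL HLR Ha Hap.
  assert (Hp := pR_spec L HL). destruct Hp as [Hp Hmin].
  intros x. remember (dl x) as n eqn:En. revert x En.
  induction n as [n IH] using lt_wf_ind. intros x En Hlt Hc.
  destruct (Nat.eq_dec n 0) as [E|E].
  - subst n. assert (Hx : lv R x) by (apply dl_zero; auto).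
    destruct (K_lemma L HL (dl (pR L)) (pR L) eq_refl (le_n _)) as (r & Hr & Hpr).
    apply (separation adj Hsym Hirr L a (pR L) HL Ha Hp Hap).
    eapply rt_trans; [exact Hc|]. eapply rt_trans; [apply (R_avoid L x r HL HLR Hx Hr)|].
    apply avoid_sym; auto.
  - destruct (dl_step x) as (w & Hw & Hd); [lia|].
    destruct (classic (L x w)) as [Hxw|Hxw].
    + destruct (classic (a = x)) as [->|Hax]; [lia|].
      apply (separation adj Hsym Hirr L a x HL Ha (proj1 (lv_sym L x w HL Hxw)) Hax Hc).
    + apply (IH (dl w) ltac:(lia) w eq_refl ltac:(lia)).
      eapply rt_trans; [exact Hc|]. apply rt_step. split; auto.
Qed.

Lemma tree_child v L : lobe L -> lv L v -> L <> parR v -> L <> R /\ pR L = v.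
Proof.
  intros HL Hv Hne. destruct (parR_spec v) as (HP & HPv & HP0 & HPs).
  destruct (pR_spec L HL) as [Hp Hmin].
  destruct (Nat.eq_dec (dl v) 0) as [E|E].
  - assert (HLR : L <> R) by (rewrite <- (HP0 E); auto). split; auto.
    apply NNPP. intros Hpv.
    assert (Hp0 : dl (pR L) = 0) by (specialize (Hmin v Hv); lia).
    apply (separation adj Hsym Hirr L v (pR L) HL Hv Hp (fun h => Hpv (eq_sym h))).
    apply R_avoid; auto; apply dl_zero; auto.
  - assert (HLR : L <> R).
    { intros ->. apply E. apply dl_zero. auto. }
    split; auto. apply NNPP. intros Hpv.
    destruct (HPs ltac:(lia)) as (w & Hw & Hd).
    destruct (classic (L v w)) as [Hvw|Hvw].
    + apply Hne. eapply lobe_share; eauto.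
    + apply (G_lemma L v HL HLR Hv (fun h => Hpv (eq_sym h)) w ltac:(lia)).
      apply rt_step. split; auto. eapply lobe_adj; eauto.
Qed.

Lemma par_R v : lv R v -> parR v = R.
Proof. intros H. apply (proj1 (proj2 (proj2 (parR_spec v)))). apply dl_zero; auto. Qed.

Lemma par_ne v : parR v <> R -> pR (parR v) <> v /\ dl (pR (parR v)) < dl v.
Proof.
  intros Hne. destruct (parR_spec v) as (HP & HPv & HP0 & HPs).
  destruct (Nat.eq_dec (dl v) 0) as [E|E]; [exfalso; auto|].
  destruct (HPs ltac:(lia)) as (w & Hw & Hd).
  destruct (pR_spec _ HP) as [_ Hmin].
  assert (dl (pR (parR v)) <= dl w) by (apply Hmin; exact (proj2 (lv_sym _ v w HP Hw))).
  split; [intros Heq; rewrite Heq in *; lia|lia].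
Qed.

End Tree.


Lemma choice_fun {A B : Type} (P : A -> B -> Prop) : (forall x, exists y, P x y) -> exists f, forall x, P x (f x).
Proof.
  intros H. exists (fun x => proj1_sig (constructive_indefinite_description _ (H x))).
  intros x. destruct (constructive_indefinite_description _ _) as (y & Hy). exact Hy.
Qed.

Section Auts.
Context {V : Type} (adj : V -> V -> Prop).
Hypothesis Hsym : forall x y, adj x y -> adj y x.
Hypothesis Hirr : forall x, ~ adj x x.

Notation lobe := (is_lobe V adj).
Notation lv := (lobe_vertex V).
Notation aut := (is_aut V adj).

Lemma aut_id : aut (fun x => x).
Proof. split; [intros y; exists y; auto|split; [auto|tauto]]. Qed.

Lemma aut_comp f g : aut f -> aut g -> aut (fun x => f (g x)).
Proof.
  intros (F1 & F2 & F3) (G1 & G2 & G3). split; [|split].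
  - intros y. destruct (F1 y) as (z & <-). destruct (G1 z) as (x & <-). eauto.
  - intros x y H. auto.
  - intros x y. rewrite G3, F3. tauto.
Qed.

Lemma aut_inv f : aut f -> exists g, aut g /\ (forall x, f (g x) = x) /\ (forall x, g (f x) = x).
Proof.
  intros (F1 & F2 & F3). destruct (choice_fun (fun y x => f x = y) F1) as (g & Hg). cbv beta in Hg.
  assert (Hgf : forall x, g (f x) = x) by (intros x; apply F2; rewrite Hg; auto).
  exists g. split; [|split; auto]. split; [|split].
  - intros y. exists (f y). auto.
  - intros x y H. rewrite <- (Hg x), <- (Hg y), H. auto.
  - intros x y. rewrite (F3 (g x) (g y)), !Hg. tauto.
Qed.

Lemma aut_orbit_refl u : aut_orbit V adj u u.
Proof. exists (fun x => x). split; auto. apply aut_id. Qed.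

Lemma aut_orbit_sym u v : aut_orbit V adj u v -> aut_orbit V adj v u.
Proof.
  intros (f & Hf & <-). destruct (aut_inv f Hf) as (g & Hg & H1 & H2). exists g. auto.
Qed.

Lemma aut_orbit_trans u v w : aut_orbit V adj u v -> aut_orbit V adj v w -> aut_orbit V adj u w.
Proof.
  intros (f & Hf & <-) (g & Hg & <-). exists (fun x => g (f x)). split; auto. apply aut_comp; auto.
Qed.

Lemma stab_refl L0 u : stab_orbit V adj L0 u u.
Proof. exists (fun x => x). split; [apply aut_id|]. split; auto. intros x y; tauto. Qed.

Lemma stab_sym L0 u v : stab_orbit V adj L0 u v -> stab_orbit V adj L0 v u.
Proof.
  intros (f & Hf & Hm & <-). destruct (aut_inv f Hf) as (g & Hg & H1 & H2). exists g.
  split; auto. split; auto. intros x y. rewrite (Hm (g x) (g y)), !H1. tauto.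
Qed.

Lemma stab_trans L0 u v w : stab_orbit V adj L0 u v -> stab_orbit V adj L0 v w -> stab_orbit V adj L0 u w.
Proof.
  intros (f & Hf & Hm & <-) (g & Hg & Hm' & <-). exists (fun x => g (f x)).
  split; [apply aut_comp; auto|]. split; auto. intros x y. rewrite (Hm x y), (Hm' (f x) (f y)). tauto.
Qed.

Lemma stab_lv L0 u v : stab_orbit V adj L0 u v -> lv L0 u -> lv L0 v.
Proof. intros (f & Hf & Hm & <-) (w & Hw). exists (f w). apply (proj1 (Hm u w)). exact Hw. Qed.

Lemma cyc_aut (f : V -> V) c : aut f -> cyc adj c -> cyc adj (map f c).
Proof.
  intros (F1 & F2 & F3) (H1 & H2 & H3). split; [|split].
  - rewrite length_map. auto.
  - apply NoDup_map_NoDup_ForallPairs; auto. intros x y _ _. auto.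
  - assert (E : close (map f c) = map f (close c)) by (destruct c; simpl; auto; now rewrite map_app).
    rewrite E. eapply chain_map; [|exact H3]. intros a b. apply F3.
Qed.

Lemma ce_aut (f : V -> V) (c : list V) a b : ce c a b -> ce (map f c) (f a) (f b).
Proof.
  assert (E : close (map f c) = map f (close c)) by (destruct c; simpl; auto; now rewrite map_app).
  unfold ce. rewrite E. intros [H|H]; [left|right]; apply ein_map; auto.
Qed.

Lemma EE_aut f x y u w : aut f -> EE adj x y u w -> EE adj (f x) (f y) (f u) (f w).
Proof.
  intros Hf [[[-> ->]|[-> ->]]|(c & H1 & H2 & H3)]; [left; left; auto|left; right; auto|].
  right. exists (map f c). split; [apply cyc_aut; auto|]. split; apply ce_aut; auto.
Qed.

Definition img (f : V -> V) (L : V -> V -> Prop) : V -> V -> Prop :=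
  fun a b => exists x y, f x = a /\ f y = b /\ L x y.

Lemma img_app f L x y : aut f -> (img f L (f x) (f y) <-> L x y).
Proof.
  intros (F1 & F2 & F3). split.
  - intros (x' & y' & E1 & E2 & H). apply F2 in E1, E2. subst. auto.
  - intros H. exists x, y. auto.
Qed.

Lemma img_lobe f L : aut f -> lobe L -> lobe (img f L).
Proof.
  intros Hf HL. apply lobe_char in HL as (x & y & H1 & H2). apply lobe_char.
  exists (f x), (f y). split; [apply (proj1 (proj2 (proj2 Hf) x y)); exact H1|].
  destruct (aut_inv f Hf) as (g & Hg & G1 & G2).
  intros a b. rewrite <- (G1 a), <- (G1 b). rewrite img_app by auto. rewrite H2.
  rewrite <- (proj2 (proj2 Hf) (g a) (g b)). split; intros [A B]; split; auto.
  - apply EE_aut; auto.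
  - apply (EE_aut g) in B; auto. rewrite !G2 in B. auto.
Qed.

Lemma img_maps f L : aut f -> maps_lobe V f L (img f L).
Proof. intros Hf x y. rewrite img_app; tauto. Qed.

Lemma img_img f g L : (forall x, f (g x) = x) -> (forall x, g (f x) = x) -> img f (img g L) = L.
Proof.
  intros H1 H2. apply functional_extensionality; intros a. apply functional_extensionality; intros b.
  apply propositional_extensionality. split.
  - intros (x & y & <- & <- & (x' & y' & <- & <- & H)). rewrite !H1. auto.
  - intros H. exists (g a), (g b). split; auto. split; auto. exists a, b. auto.
Qed.

Lemma img_inj f L L' : aut f -> img f L = img f L' -> L = L'.
Proof.
  intros Hf E. apply functional_extensionality; intros a. apply functional_extensionality; intros b.
  apply propositional_extensionality. rewrite <- (img_app f L a b Hf), <- (img_app f L' a b Hf), E. tauto.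
Qed.

Lemma aut_iso f L L' : aut f -> maps_lobe V f L L' -> lobe_iso V L L' f.
Proof.
  intros (F1 & F2 & F3) Hm. split; [|split; [|split]].
  - intros v (w & Hw). exists (f w). apply Hm. auto.
  - intros v w _ _. auto.
  - intros u (w & Hw). destruct (F1 u) as (v & <-). destruct (F1 w) as (w' & <-).
    exists v. split; auto. exists w'. apply Hm. auto.
  - intros v w _ _. apply Hm.
Qed.

Lemma iso_comp A B C s t : lobe_iso V A B s -> lobe_iso V B C t -> lobe_iso V A C (fun x => t (s x)).
Proof.
  intros (S1 & S2 & S3 & S4) (T1 & T2 & T3 & T4). split; [|split; [|split]].
  - auto.
  - intros v w Hv Hw H. apply S2; auto.
  - intros u Hu. destruct (T3 u Hu) as (w & Hw & <-). destruct (S3 w Hw) as (v & Hv & <-). eauto.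
  - intros v w Hv Hw. rewrite S4, T4; auto. tauto.
Qed.

Lemma iso_inv_ex A B s : lobe_iso V A B s -> exists t, forall v, lv B v -> lv A (t v) /\ s (t v) = v.
Proof.
  intros (S1 & S2 & S3 & S4).
  destruct (choice_fun (fun v x => lv B v -> lv A x /\ s x = v)) as (t & Ht).
  - intros v. destruct (classic (lv B v)) as [Hv|Hv].
    + destruct (S3 v Hv) as (x & Hx & <-). eauto.
    + exists v. tauto.
  - exists t. auto.
Qed.

Lemma iso_inv A B s t : lobe_iso V A B s -> (forall v, lv B v -> lv A (t v) /\ s (t v) = v) ->
  lobe_iso V B A t /\ (forall x, lv A x -> t (s x) = x).
Proof.
  intros (S1 & S2 & S3 & S4) Ht.
  assert (K : forall x, lv A x -> t (s x) = x).
  { intros x Hx. destruct (Ht (s x) (S1 x Hx)) as [H1 H2]. apply S2; auto. }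
  split; auto. split; [|split; [|split]].
  - intros v Hv. apply Ht; auto.
  - intros v w Hv Hw H. rewrite <- (proj2 (Ht v Hv)), <- (proj2 (Ht w Hw)), H. auto.
  - intros u Hu. exists (s u). split; auto.
  - intros v w Hv Hw. destruct (Ht v Hv) as [A1 A2]. destruct (Ht w Hw) as [B1 B2].
    rewrite (S4 (t v) (t w)) by auto. rewrite A2, B2. tauto.
Qed.

End Auts.


Section Forward.
Context {V : Type} (adj : V -> V -> Prop).
Hypothesis Hsym : forall x y, adj x y -> adj y x.
Hypothesis Hirr : forall x, ~ adj x x.
Variable L0 : V -> V -> Prop.
Hypothesis HL0 : is_lobe V adj L0.

Notation lobe := (is_lobe V adj).
Notation lv := (lobe_vertex V).
Notation aut := (is_aut V adj).

Variable sigma : (V -> V -> Prop) -> V -> V.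
Hypothesis Hsig : forall L, lobe L -> aut (sigma L) /\ maps_lobe V (sigma L) L0 L.

Lemma tau_map h u w q L : aut h -> h u = w -> tau_set adj L0 sigma q u L -> tau_set adj L0 sigma q w (img h L).
Proof.
  intros Hh Huw (HL & x & Hx & Hsx).
  assert (HL' : lobe (img h L)) by (apply img_lobe; auto).
  destruct (Hsig L HL) as [Hs Hsm]. destruct (Hsig _ HL') as [Hs' Hsm'].
  destruct (aut_inv adj _ Hs') as (t & Ht & T1 & T2).
  split; auto. exists (t (h (sigma L x))). split.
  - eapply stab_trans; [exact Hx|]. exists (fun z => t (h (sigma L z))). split.
    + apply (aut_comp adj t (fun z => h (sigma L z))); [exact Ht|]. apply (aut_comp adj h (sigma L)); assumption.
    + split; auto. intros a b. rewrite (Hsm a b). rewrite <- (img_app adj h L _ _ Hh).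
      rewrite (Hsm' (t (h (sigma L a))) (t (h (sigma L b)))). rewrite !T1. tauto.
  - rewrite T1. congruence.
Qed.

Lemma L0_tau q : lv L0 q -> tau_set adj L0 sigma q q L0.
Proof.
  intros Hq. destruct (Hsig L0 HL0) as [Hs Hsm]. destruct (aut_inv adj _ Hs) as (t & Ht & T1 & T2).
  split; auto. exists (t q). split; auto. exists t. split; auto. split; auto.
  intros a b. rewrite (Hsm (t a) (t b)), !T1. tauto.
Qed.

Lemma forward_tau q : lv L0 q ->
  (forall u w, aut_orbit V adj u w ->
     equinumerous (tau_set adj L0 sigma q u) (tau_set adj L0 sigma q w)) /\
  (forall v, (exists L, tau_set adj L0 sigma q v L) <-> aut_orbit V adj q v).
Proof.
  intros Hq. split.
  - intros u w (h & Hh & Huw). destruct (aut_inv adj h Hh) as (k & Hk & K1 & K2).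
    exists (img h). split; [|split].
    + intros L HL. eapply tau_map; eauto.
    + intros L1 L2 _ _ E. exact (img_inj adj h L1 L2 Hh E).
    + intros L' HL'. exists (img k L'). split.
      * apply (tau_map k w u q L' Hk); [rewrite <- Huw; apply K2|exact HL'].
      * apply img_img; auto.
  - intros v. split.
    + intros (L & HL & x & (g & Hg & Hgm & <-) & <-). exists (fun z => sigma L (g z)).
      split; auto. apply aut_comp; auto. apply Hsig; auto.
    + intros (h & Hh & <-). exists (img h L0). eapply tau_map; eauto. apply L0_tau; auto.
Qed.

End Forward.

Lemma forward_dir {V} (adj : V -> V -> Prop) (Hsym : forall x y, adj x y -> adj y x)
  (L0 : V -> V -> Prop) (HL0 : is_lobe V adj L0) :
  lobe_transitive V adj ->
  exists sigma : (V -> V -> Prop) -> V -> V,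
    (forall L, is_lobe V adj L -> lobe_iso V L0 L (sigma L)) /\
    (forall q, lobe_vertex V L0 q ->
       (forall u w, aut_orbit V adj u w ->
          equinumerous (tau_set adj L0 sigma q u) (tau_set adj L0 sigma q w)) /\
       (forall v, (exists L, tau_set adj L0 sigma q v L) <-> aut_orbit V adj q v)).
Proof.
  intros Hlt.
  destruct (choice_fun (fun L s => is_lobe V adj L -> is_aut V adj s /\ maps_lobe V s L0 L)) as (sigma & Hs).
  { intros L. destruct (classic (is_lobe V adj L)) as [HL|HL].
    - destruct (Hlt L0 L HL0 HL) as (f & Hf & Hm). eauto.
    - exists (fun x => x). tauto. }
  exists sigma. split.
  - intros L HL. destruct (Hs L HL). apply (aut_iso adj); auto.
  - intros q Hq. apply (forward_tau adj L0 HL0 sigma Hs q Hq).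
Qed.


Lemma equi_remove {X : Type} (A B : X -> Prop) a b :
  equinumerous A B -> (A a <-> B b) ->
  equinumerous (fun x => A x /\ x <> a) (fun y => B y /\ y <> b).
Proof.
  intros (f & F1 & F2 & F3) Hab. destruct (classic (A a)) as [Ha|Ha].
  - assert (Hb : B b) by tauto.
    exists (fun x => if excluded_middle_informative (f x = b) then f a else f x).
    split; [|split].
    + intros x [Hx Hxa]. destruct (excluded_middle_informative (f x = b)) as [E|E].
      * split; auto. intros E'. apply Hxa. apply F2; auto. congruence.
      * split; auto.
    + intros x1 x2 [H1 H1a] [H2 H2a].
      destruct (excluded_middle_informative (f x1 = b)) as [E1|E1];
      destruct (excluded_middle_informative (f x2 = b)) as [E2|E2]; intros E.
      * apply F2; auto. congruence.
      * exfalso. apply H2a. apply F2; auto.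
      * exfalso. apply H1a. apply F2; auto.
      * apply F2; auto.
    + intros y [Hy Hyb]. destruct (F3 y Hy) as (x & Hx & <-).
      destruct (classic (x = a)) as [->|Hxa].
      * destruct (F3 b Hb) as (x0 & Hx0 & E0). exists x0. split.
        -- split; auto. intros ->. congruence.
        -- destruct (excluded_middle_informative (f x0 = b)); congruence.
      * exists x. split; auto. destruct (excluded_middle_informative (f x = b)); congruence.
  - assert (Hb : ~ B b) by tauto. exists f. split; [|split].
    + intros x [Hx Hxa]. split; auto. intros E. apply Hb. rewrite <- E. auto.
    + intros x1 x2 [H1 _] [H2 _]. auto.
    + intros y [Hy Hyb]. destruct (F3 y Hy) as (x & Hx & <-). exists x. split; auto.
      split; auto. intros ->. auto.
Qed.

Section Backward.
Context {V : Type} (adj : V -> V -> Prop).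
Hypothesis Hsym : forall x y, adj x y -> adj y x.
Hypothesis Hirr : forall x, ~ adj x x.
Hypothesis Hconn : connected V adj.
Variable L0 : V -> V -> Prop.
Hypothesis HL0 : is_lobe V adj L0.

Notation lobe := (is_lobe V adj).
Notation lv := (lobe_vertex V).
Notation aut := (is_aut V adj).
Notation Lb := (V -> V -> Prop).

Variable sigma : Lb -> V -> V.
Hypothesis Hsig : forall L, lobe L -> lobe_iso V L0 L (sigma L).
Hypothesis HA : forall q, lv L0 q ->
  forall u w, aut_orbit V adj u w ->
     equinumerous (tau_set adj L0 sigma q u) (tau_set adj L0 sigma q w).
Hypothesis HB : forall q, lv L0 q ->
  forall v, (exists L, tau_set adj L0 sigma q v L) <-> aut_orbit V adj q v.

Lemma sinv_ex L : exists t, lobe L -> forall v, lv L v -> lv L0 (t v) /\ sigma L (t v) = v.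
Proof.
  destruct (classic (lobe L)) as [HL|HL].
  - destruct (iso_inv_ex _ _ _ (Hsig L HL)) as (t & Ht). eauto.
  - exists (fun x => x). tauto.
Qed.

Definition sinv L := proj1_sig (constructive_indefinite_description _ (sinv_ex L)).

Lemma sinv_spec L : lobe L -> forall v, lv L v -> lv L0 (sinv L v) /\ sigma L (sinv L v) = v.
Proof. unfold sinv. destruct (constructive_indefinite_description _ _) as (t & Ht). exact Ht. Qed.

Lemma sinv_iso L : lobe L -> lobe_iso V L L0 (sinv L) /\ (forall x, lv L0 x -> sinv L (sigma L x) = x).
Proof. intros HL. apply iso_inv; [apply Hsig; auto|]. apply sinv_spec; auto. Qed.

Lemma sig_lv L x : lobe L -> lv L0 x -> lv L (sigma L x).
Proof. intros HL Hx. apply (Hsig L HL); auto. Qed.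

Lemma sig_inj L x y : lobe L -> lv L0 x -> lv L0 y -> sigma L x = sigma L y -> x = y.
Proof. intros HL Hx Hy. apply (Hsig L HL); auto. Qed.

Definition phi (Psi : Lb -> Lb) (G : Lb -> V -> V) (L : Lb) (x : V) : V :=
  sigma (Psi L) (G L (sinv L x)).

Definition Sgood (g : V -> V) := aut g /\ maps_lobe V g L0 L0.

Lemma Sgood_lv g x : Sgood g -> lv L0 x -> lv L0 (g x).
Proof. intros [Hg Hm] (w & Hw). exists (g w). apply (proj1 (Hm x w)). exact Hw. Qed.

Lemma phi_iso Psi G L : lobe L -> lobe (Psi L) -> Sgood (G L) -> lobe_iso V L (Psi L) (phi Psi G L).
Proof.
  intros HL HP [Hg Hm]. unfold phi.
  apply (iso_comp L L0 (Psi L) (fun x => G L (sinv L x)) (sigma (Psi L))); [|apply Hsig; auto].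
  apply (iso_comp L L0 L0 (sinv L) (G L)); [apply sinv_iso; auto|].
  apply (aut_iso adj); auto.
Qed.

Lemma tau_in q v L x : lobe L -> stab_orbit V adj L0 q x -> sigma L x = v -> tau_set adj L0 sigma q v L.
Proof. intros HL Hx Hv. split; auto. exists x. auto. Qed.

Lemma phi_orbit Psi G L v : lobe L -> lobe (Psi L) -> Sgood (G L) -> lv L v ->
  aut_orbit V adj v (phi Psi G L v).
Proof.
  intros HL HP HG Hv. destruct (sinv_spec L HL v Hv) as [Hz Hsz].
  set (z := sinv L v) in *.
  assert (O1 : aut_orbit V adj z v).
  { apply (HB z Hz). exists L. apply (tau_in z v L z HL (stab_refl adj L0 z) Hsz). }
  assert (O2 : aut_orbit V adj z (phi Psi G L v)).
  { apply (HB z Hz). exists (Psi L). apply (tau_in z _ (Psi L) (G L z) HP).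
    - destruct HG as [Hg Hm]. exists (G L). auto.
    - reflexivity. }
  eapply aut_orbit_trans; [apply aut_orbit_sym; exact O1|exact O2].
Qed.

Lemma phi_stab Psi G L v : lobe L -> lobe (Psi L) -> Sgood (G L) -> lv L v ->
  stab_orbit V adj L0 (sinv L v) (sinv (Psi L) (phi Psi G L v)).
Proof.
  intros HL HP HG Hv. destruct (sinv_spec L HL v Hv) as [Hz Hsz].
  unfold phi. rewrite (proj2 (sinv_iso _ HP)) by (apply Sgood_lv; auto).
  destruct HG as [Hg Hm]. exists (G L). auto.
Qed.

Lemma tau_char q v L : lv L0 q -> lobe L -> lv L v ->
  (tau_set adj L0 sigma q v L <-> stab_orbit V adj L0 q (sinv L v)).
Proof.
  intros Hq HL Hv. split.
  - intros (_ & x & Hx & Hxv). assert (Hxl : lv L0 x) by (eapply stab_lv; eauto).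
    rewrite <- Hxv. rewrite (proj2 (sinv_iso L HL)); auto.
  - intros H. apply (tau_in q v L (sinv L v) HL H). apply sinv_spec; auto.
Qed.

Lemma tau_lv q v L : lv L0 q -> tau_set adj L0 sigma q v L -> lv L v.
Proof.
  intros Hq (HL & x & Hx & <-). apply sig_lv; auto. eapply stab_lv; eauto.
Qed.

Lemma matching v v' P P' : lobe P -> lv P v -> lobe P' -> lv P' v' -> aut_orbit V adj v v' ->
  stab_orbit V adj L0 (sinv P v) (sinv P' v') ->
  exists (beta : Lb -> Lb) (gg : Lb -> V -> V),
    (forall L, lobe L -> lv L v -> L <> P ->
       lobe (beta L) /\ lv (beta L) v' /\ beta L <> P' /\ Sgood (gg L) /\
       sigma (beta L) (gg L (sinv L v)) = v') /\
    (forall La Lb, lobe La -> lv La v -> La <> P -> lobe Lb -> lv Lb v -> Lb <> P ->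
       beta La = beta Lb -> La = Lb) /\
    (forall M, lobe M -> lv M v' -> M <> P' -> exists L, lobe L /\ lv L v /\ L <> P /\ beta L = M).
Proof.
  intros HP HPv HP' HPv' Hvv' Hst.
  set (rep := fun q => epsilon (inhabits v) (fun r => stab_orbit V adj L0 q r)).
  assert (Rep1 : forall q, stab_orbit V adj L0 q (rep q)).
  { intros q. unfold rep. apply epsilon_spec. exists q. apply stab_refl. }
  assert (Rep2 : forall q q', stab_orbit V adj L0 q q' -> rep q = rep q').
  { intros q q' H. unfold rep. f_equal. apply functional_extensionality. intros r.
    apply propositional_extensionality. split; intros H'.
    - eapply stab_trans; [apply stab_sym; exact H|exact H'].
    - eapply stab_trans; [exact H|exact H']. }
  set (T := fun q x L => tau_set adj L0 sigma q x L).
  assert (Heq : forall r, lv L0 r -> equinumerous (fun L => T r v L /\ L <> P) (fun L => T r v' L /\ L <> P')).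
  { intros r Hr. apply equi_remove; [apply HA; auto|]. unfold T.
    rewrite (tau_char r v P Hr HP HPv), (tau_char r v' P' Hr HP' HPv'). split; intros H.
    - eapply stab_trans; eauto.
    - eapply stab_trans; [exact H|apply stab_sym; exact Hst]. }
  destruct (choice_fun (fun r h => lv L0 r ->
      (forall a, T r v a /\ a <> P -> T r v' (h a) /\ h a <> P') /\
      (forall a1 a2, T r v a1 /\ a1 <> P -> T r v a2 /\ a2 <> P -> h a1 = h a2 -> a1 = a2) /\
      (forall b, T r v' b /\ b <> P' -> exists a, (T r v a /\ a <> P) /\ h a = b))) as (H & HH).
  { intros r. destruct (classic (lv L0 r)) as [Hr|Hr].
    - destruct (Heq r Hr) as (h & Hh). exists h. auto.
    - exists (fun x => x). tauto. }
  set (beta := fun L => H (rep (sinv L v)) L).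
  assert (Hclass : forall L, lobe L -> lv L v -> L <> P ->
     lv L0 (rep (sinv L v)) /\ T (rep (sinv L v)) v L /\ T (rep (sinv L v)) v' (beta L) /\ beta L <> P').
  { intros L HL HLv HLP. destruct (sinv_spec L HL v HLv) as [Hz Hsz].
    assert (Hr : lv L0 (rep (sinv L v))) by (eapply stab_lv; [apply Rep1|auto]).
    assert (HT : T (rep (sinv L v)) v L).
    { unfold T. apply (tau_char _ v L Hr HL HLv). apply stab_sym, Rep1. }
    destruct (HH _ Hr) as (HH1 & _ & _). destruct (HH1 L (conj HT HLP)) as [A1 A2].
    auto. }
  destruct (choice_fun (fun L g => lobe L -> lv L v -> L <> P ->
      Sgood g /\ sigma (beta L) (g (sinv L v)) = v')) as (gg & Hgg).
  { intros L. destruct (classic (lobe L /\ lv L v /\ L <> P)) as [(HL & HLv & HLP)|Hn].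
    - destruct (Hclass L HL HLv HLP) as (Hr & HT & HT' & HbP).
      destruct HT' as (Hb & x' & Hx' & Hsx').
      assert (Hzx : stab_orbit V adj L0 (sinv L v) x').
      { eapply stab_trans; [apply Rep1|exact Hx']. }
      destruct Hzx as (g & Hg & Hgm & Hgz). exists g. intros _ _ _. split; [split; auto|].
      rewrite Hgz. exact Hsx'.
    - exists (fun x => x). intros HL HLv HLP. exfalso. auto. }
  exists beta, gg. split; [|split].
  - intros L HL HLv HLP. destruct (Hclass L HL HLv HLP) as (Hr & HT & HT' & HbP).
    destruct (Hgg L HL HLv HLP) as [Hg Hgv]. split; [apply HT'|]. split; [|auto].
    eapply tau_lv; [exact Hr|exact HT'].
  - intros La Lb' HLa HLav HLaP HLb HLbv HLbP E.
    destruct (Hclass La HLa HLav HLaP) as (Hra & HTa & HTa' & _).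
    destruct (Hclass Lb' HLb HLbv HLbP) as (Hrb & HTb & HTb' & _).
    assert (Hrr : rep (sinv La v) = rep (sinv Lb' v)).
    { destruct HTa' as (HbL & xa & Hxa & Hsxa). destruct HTb' as (_ & xb & Hxb & Hsxb).
      fold (beta Lb') in *. rewrite <- E in Hsxb.
      assert (xa = xb).
      { apply (sig_inj (beta La) xa xb HbL); [eapply stab_lv; eauto|eapply stab_lv; eauto|congruence]. }
      subst xb. apply Rep2. eapply stab_trans; [apply Rep1|].
      eapply stab_trans; [exact Hxa|]. eapply stab_trans; [apply stab_sym; exact Hxb|].
      apply stab_sym, Rep1. }
    destruct (HH _ Hra) as (_ & HH2 & _). apply HH2; auto.
    + rewrite Hrr. auto.
    + unfold beta in E. rewrite Hrr in E |- *. exact E.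
  - intros M HM HMv HMP. destruct (sinv_spec M HM v' HMv) as [Hx' Hsx'].
    set (r := rep (sinv M v')).
    assert (Hr : lv L0 r) by (eapply stab_lv; [apply Rep1|auto]).
    assert (HT : T r v' M) by (apply (tau_char r v' M Hr HM HMv); apply stab_sym, Rep1).
    destruct (HH r Hr) as (_ & _ & HH3). destruct (HH3 M (conj HT HMP)) as (L & [HTL HLP] & HLM).
    assert (HLv : lv L v) by (eapply tau_lv; eauto).
    exists L. split; [apply HTL|]. split; auto. split; auto.
    unfold beta. replace (rep (sinv L v)) with r; auto.
    assert (Hrr : rep r = r).
    { unfold r. symmetry. apply Rep2. apply Rep1. }
    assert (Hs : stab_orbit V adj L0 r (sinv L v))
      by (apply (proj1 (tau_char r v L Hr (proj1 HTL) HLv)); exact HTL).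
    transitivity (rep r); [symmetry; exact Hrr|apply (Rep2 r (sinv L v)); exact Hs].
Qed.


Variables L1 L2 : Lb.
Hypothesis HL1 : lobe L1.
Hypothesis HL2 : lobe L2.

Notation d1 := (dl adj Hconn L1 HL1).
Notation p1 := (pR adj Hconn L1 HL1).
Notation par1 := (parR adj Hconn L1 HL1).
Notation d2 := (dl adj Hconn L2 HL2).
Notation p2 := (pR adj Hconn L2 HL2).
Notation par2 := (parR adj Hconn L2 HL2).

Lemma tc1 v L : lobe L -> lv L v -> L <> par1 v -> L <> L1 /\ p1 L = v.
Proof. intros; apply tree_child; auto. Qed.
Lemma tc2 v L : lobe L -> lv L v -> L <> par2 v -> L <> L2 /\ p2 L = v.
Proof. intros; apply tree_child; auto. Qed.
Lemma par1_spec v : lobe (par1 v) /\ lv (par1 v) v.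
Proof. destruct (parR_spec adj Hconn L1 HL1 v) as (A & B & _). auto. Qed.
Lemma par2_spec v : lobe (par2 v) /\ lv (par2 v) v.
Proof. destruct (parR_spec adj Hconn L2 HL2 v) as (A & B & _). auto. Qed.
Lemma p1_spec L : lobe L -> lv L (p1 L).
Proof. intros HL. apply (pR_spec adj Hconn L1 HL1 L HL). Qed.
Lemma p2_spec L : lobe L -> lv L (p2 L).
Proof. intros HL. apply (pR_spec adj Hconn L2 HL2 L HL). Qed.
Lemma par1_R v : lv L1 v -> par1 v = L1.
Proof. intros; apply par_R; auto. Qed.
Lemma par2_R v : lv L2 v -> par2 v = L2.
Proof. intros; apply par_R; auto. Qed.
Lemma par1_ne v : par1 v <> L1 -> p1 (par1 v) <> v /\ d1 (p1 (par1 v)) < d1 v.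
Proof. intros; apply par_ne; auto. Qed.
Lemma par2_ne v : par2 v <> L2 -> p2 (par2 v) <> v /\ d2 (p2 (par2 v)) < d2 v.
Proof. intros; apply par_ne; auto. Qed.

Definition LI (Psi : Lb -> Lb) (G : Lb -> V -> V) (L : Lb) : Prop :=
  lobe (Psi L) /\ Sgood (G L) /\ (L = L1 -> Psi L = L2) /\
  (L <> L1 -> Psi L <> L2 /\ p2 (Psi L) = phi Psi G L (p1 L) /\
              phi Psi G L (p1 L) = phi Psi G (par1 (p1 L)) (p1 L)).

Definition fF Psi G v := phi Psi G (par1 v) v.
Definition ch1 v L := lobe L /\ lv L v /\ L <> par1 v.
Definition ch2 v L := lobe L /\ lv L v /\ L <> par2 v.

Definition VI Psi G v : Prop :=
  (forall La Lb', ch1 v La -> ch1 v Lb' -> Psi La = Psi Lb' -> La = Lb') /\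
  (forall M, ch2 (fF Psi G v) M -> exists L, ch1 v L /\ Psi L = M).

Definition cov n L := L = L1 \/ d1 (p1 L) < n.

Definition Inv n Psi G := (forall L, lobe L -> cov n L -> LI Psi G L) /\ (forall v, d1 v < n -> VI Psi G v).

Definition agree n (Psi : Lb -> Lb) (G : Lb -> V -> V) Psi' G' :=
  forall L, cov n L -> Psi L = Psi' L /\ G L = G' L.

Lemma cov_mono n m L : cov n L -> n <= m -> cov m L.
Proof. intros [H|H] Hnm; [left|right; lia]; auto. Qed.

Lemma cov_par v : cov (d1 v) (par1 v).
Proof.
  destruct (classic (par1 v = L1)) as [E|E]; [left; auto|right].
  apply par1_ne; auto.
Qed.

Lemma ch1_cov v L : ch1 v L -> L <> L1 /\ p1 L = v.
Proof. intros (A & B & C). apply tc1; auto. Qed.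

Lemma phi_agree Psi G Psi' G' L x : Psi L = Psi' L -> G L = G' L -> phi Psi G L x = phi Psi' G' L x.
Proof. intros E1 E2. unfold phi. rewrite E1, E2. reflexivity. Qed.

Lemma LI_agree Psi G Psi' G' L : LI Psi G L -> Psi L = Psi' L -> G L = G' L ->
  (L <> L1 -> Psi (par1 (p1 L)) = Psi' (par1 (p1 L)) /\ G (par1 (p1 L)) = G' (par1 (p1 L))) ->
  LI Psi' G' L.
Proof.
  intros (A & B & C & D) E1 E2 E3. unfold LI. rewrite <- E1, <- E2. split; auto. split; auto. split; auto.
  intros HL. destruct (D HL) as (D1 & D2 & D3). destruct (E3 HL) as [F1 F2].
  rewrite <- (phi_agree Psi G Psi' G' L (p1 L)) by auto.
  rewrite <- (phi_agree Psi G Psi' G' (par1 (p1 L)) (p1 L)) by auto. auto.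
Qed.

Lemma VI_agree Psi G Psi' G' v : VI Psi G v -> (forall L, ch1 v L -> Psi L = Psi' L) ->
  Psi (par1 v) = Psi' (par1 v) -> G (par1 v) = G' (par1 v) -> VI Psi' G' v.
Proof.
  intros [I1 I2] E E1 E2. assert (Ef : fF Psi G v = fF Psi' G' v) by (apply phi_agree; auto).
  split.
  - intros La Lb' Ha Hb H. apply I1; auto. rewrite (E La Ha), (E Lb' Hb). auto.
  - intros M HM. rewrite <- Ef in HM. destruct (I2 M HM) as (L & HL & <-). exists L. split; auto.
    symmetry. auto.
Qed.

Lemma LI_iso Psi G L : lobe L -> LI Psi G L -> lobe_iso V L (Psi L) (phi Psi G L).
Proof. intros HL (A & B & _). apply phi_iso; auto. Qed.

Lemma PsiPar_gen Psi G v : LI Psi G (par1 v) -> Psi (par1 v) = par2 (fF Psi G v).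
Proof.
  intros HLI. destruct (par1_spec v) as [HP HPv].
  assert (Hiso := LI_iso Psi G (par1 v) HP HLI).
  destruct HLI as (A & B & C & D).
  destruct Hiso as (I1 & I2 & I3 & I4).
  destruct (classic (par1 v = L1)) as [E|E].
  - rewrite (C E). symmetry. apply par2_R. rewrite <- (C E). apply I1; auto.
  - destruct (D E) as (D1 & D2 & D3). destruct (par1_ne v E) as [Hne _].
    apply NNPP. intros Hn. destruct (tc2 (fF Psi G v) (Psi (par1 v)) A (I1 v HPv) Hn) as [_ Hp].
    apply Hne. apply I2; auto. apply p1_spec; auto. rewrite <- D2, Hp. reflexivity.
Qed.

Lemma Inv0 : Inv 0 (fun _ => L2) (fun _ x => x).
Proof.
  split.
  - intros L HL [->|H]; [|lia]. split; auto. split; [split; [apply aut_id|intros x y; tauto]|].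
    split; auto. intros []; auto.
  - intros v H; lia.
Qed.

Definition MSpec v v' P P' (beta : Lb -> Lb) (gg : Lb -> V -> V) :=
    (forall L, lobe L -> lv L v -> L <> P ->
       lobe (beta L) /\ lv (beta L) v' /\ beta L <> P' /\ Sgood (gg L) /\
       sigma (beta L) (gg L (sinv L v)) = v') /\
    (forall La Lb, lobe La -> lv La v -> La <> P -> lobe Lb -> lv Lb v -> Lb <> P ->
       beta La = beta Lb -> La = Lb) /\
    (forall M, lobe M -> lv M v' -> M <> P' -> exists L, lobe L /\ lv L v /\ L <> P /\ beta L = M).

Lemma Step n Psi G : Inv n Psi G -> exists Psi' G', agree n Psi G Psi' G' /\ Inv (S n) Psi' G'.
Proof.
  intros [HLI HVI].
  assert (Hm : forall v, exists bg : (Lb -> Lb) * (Lb -> V -> V), d1 v = n ->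
     MSpec v (fF Psi G v) (par1 v) (Psi (par1 v)) (fst bg) (snd bg)).
  { intros v. destruct (classic (d1 v = n)) as [E|E]; [|exists ((fun L => L), (fun _ x => x)); tauto].
    destruct (par1_spec v) as [HP HPv].
    assert (HLIP : LI Psi G (par1 v)) by (apply HLI; auto; rewrite <- E; apply cov_par).
    destruct HLIP as (A & B & _).
    destruct (matching v (fF Psi G v) (par1 v) (Psi (par1 v))) as (beta & gg & M1 & M2 & M3); auto.
    - apply (phi_iso Psi G (par1 v) HP A B); auto.
    - apply phi_orbit; auto.
    - apply phi_stab; auto.
    - exists (beta, gg). intros _. split; auto. }
  destruct (choice_fun _ Hm) as (BB & HBB).
  set (cond := fun L => lobe L /\ L <> L1 /\ d1 (p1 L) = n).
  exists (fun L => if excluded_middle_informative (cond L) then fst (BB (p1 L)) L else Psi L).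
  exists (fun L => if excluded_middle_informative (cond L) then snd (BB (p1 L)) L else G L).
  set (Psi' := fun L => if excluded_middle_informative (cond L) then fst (BB (p1 L)) L else Psi L).
  set (G' := fun L => if excluded_middle_informative (cond L) then snd (BB (p1 L)) L else G L).
  assert (Old : forall L, cov n L -> Psi' L = Psi L /\ G' L = G L).
  { intros L HL. unfold Psi', G'. destruct (excluded_middle_informative (cond L)) as [C|C]; auto.
    exfalso. destruct C as (_ & C1 & C2). destruct HL as [HL|HL]; [auto|lia]. }
  assert (New : forall L, cond L -> Psi' L = fst (BB (p1 L)) L /\ G' L = snd (BB (p1 L)) L).
  { intros L HL. unfold Psi', G'. destruct (excluded_middle_informative (cond L)) as [C|C]; tauto. }
  fold Psi' G'. split.
  - intros L HL. destruct (Old L HL). auto.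
  - split.
    + intros L HL Hcov. destruct (classic (cov n L)) as [Hc|Hc].
      * destruct (Old L Hc) as [O1 O2]. apply (LI_agree Psi G); auto.
        intros HL1'. assert (Hcp : cov n (par1 (p1 L))).
        { destruct Hc as [Hc|Hc]; [congruence|]. eapply cov_mono; [apply cov_par|lia]. }
        destruct (Old _ Hcp). auto.
      * assert (HnL1 : L <> L1) by (intros ->; apply Hc; left; auto).
        assert (Hd : d1 (p1 L) = n).
        { destruct Hcov as [Hcov|Hcov]; [congruence|]. destruct (Nat.eq_dec (d1 (p1 L)) n); auto.
          exfalso. apply Hc. right. lia. }
        set (v := p1 L) in *.
        assert (Hch : ch1 v L).
        { split; auto. split; [apply p1_spec; auto|]. intros Hpar.
          destruct (par1_ne v) as [Hne _]; [rewrite <- Hpar; auto|]. apply Hne. rewrite <- Hpar. auto. }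
        destruct (New L (conj HL (conj HnL1 Hd))) as [N1 N2].
        destruct (HBB v Hd) as (M1 & M2 & M3).
        destruct Hch as (_ & HLv & HLP).
        destruct (M1 L HL HLv HLP) as (B1 & B2 & B3 & B4 & B5).
        assert (Hcp : cov n (par1 v)) by (rewrite <- Hd; apply cov_par).
        destruct (Old _ Hcp) as [O1 O2].
        assert (HLIP : LI Psi G (par1 v)) by (apply HLI; auto; apply par1_spec).
        assert (Hpp : Psi (par1 v) = par2 (fF Psi G v)) by (apply PsiPar_gen; auto).
        split; [rewrite N1; auto|]. split; [rewrite N2; auto|]. split; [intros; contradiction|].
        intros _. rewrite Hpp in B3.
        destruct (tc2 _ _ B1 B2 B3) as [T1 T2].
        assert (Hphi : phi Psi' G' L v = fF Psi G v).
        { unfold phi. rewrite N1, N2. exact B5. }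
        split; [rewrite N1; auto|]. split; [change (p1 L) with v; rewrite Hphi, N1; exact T2|].
        change (p1 L) with v. rewrite Hphi. unfold fF. symmetry. apply phi_agree; auto.
    + intros v Hv. destruct (classic (d1 v < n)) as [Hlt|Hge].
      * apply (VI_agree Psi G); auto.
        -- intros L HL. destruct (ch1_cov v L HL) as [_ Hp]. symmetry. apply Old. right. rewrite Hp. auto.
        -- symmetry. apply Old. eapply cov_mono; [apply cov_par|lia].
        -- symmetry. apply Old. eapply cov_mono; [apply cov_par|lia].
      * assert (Hd : d1 v = n) by lia.
        assert (Hcp : cov n (par1 v)) by (rewrite <- Hd; apply cov_par).
        destruct (Old _ Hcp) as [O1 O2].
        assert (Ef : fF Psi' G' v = fF Psi G v) by (apply phi_agree; auto).
        destruct (HBB v Hd) as (M1 & M2 & M3).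
        assert (Nv : forall L, ch1 v L -> Psi' L = fst (BB v) L).
        { intros L HL. destruct (ch1_cov v L HL) as [H1 H2].
          destruct HL as (HL & _). rewrite <- H2. apply New. split; auto. split; auto. rewrite H2. auto. }
        assert (HLIP : LI Psi G (par1 v)) by (apply HLI; auto; apply par1_spec).
        assert (Hpp : Psi (par1 v) = par2 (fF Psi G v)) by (apply PsiPar_gen; auto).
        split.
        -- intros La Lb' Ha Hb E. rewrite (Nv La Ha), (Nv Lb' Hb) in E.
           destruct Ha as (Ha1 & Ha2 & Ha3). destruct Hb as (Hb1 & Hb2 & Hb3). apply (M2 La Lb'); auto.
        -- intros M HM. rewrite Ef in HM. destruct HM as (HM1 & HM2 & HM3).
           rewrite <- Hpp in HM3. destruct (M3 M HM1 HM2 HM3) as (L & HL1' & HL2' & HL3' & HL4').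
           exists L. assert (Hc : ch1 v L) by (split; auto). split; auto. rewrite Nv; auto.
Qed.


Section Final.
Variable Psi : Lb -> Lb.
Variable G : Lb -> V -> V.
Hypothesis HLI : forall L, lobe L -> LI Psi G L.
Hypothesis HVI : forall v, VI Psi G v.

Notation f := (fF Psi G).

Lemma F_iso L : lobe L -> lobe_iso V L (Psi L) (phi Psi G L).
Proof. intros HL. apply LI_iso; auto. Qed.

Lemma F_coh L v : lobe L -> lv L v -> phi Psi G L v = f v.
Proof.
  intros HL Hv. destruct (classic (L = par1 v)) as [->|E]; [reflexivity|].
  destruct (tc1 v L HL Hv E) as [E1 E2]. destruct (HLI L HL) as (_ & _ & _ & D).
  destruct (D E1) as (_ & _ & D3). rewrite E2 in D3. exact D3.
Qed.

Lemma F_par v : Psi (par1 v) = par2 (f v).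
Proof. apply PsiPar_gen. apply HLI. apply par1_spec. Qed.

Lemma F_loc M v : lobe M -> lv M (f v) -> exists L, lobe L /\ lv L v /\ Psi L = M.
Proof.
  intros HM Hv. destruct (classic (M = par2 (f v))) as [E|E].
  - exists (par1 v). destruct (par1_spec v). split; auto. split; auto. rewrite E. apply F_par.
  - destruct (HVI v) as [_ I2]. destruct (I2 M (conj HM (conj Hv E))) as (L & (A & B & _) & C).
    eauto.
Qed.

Lemma F_pinj_n n : forall La Lb', cov n La -> cov n Lb' -> lobe La -> lobe Lb' -> Psi La = Psi Lb' -> La = Lb'.
Proof.
  induction n as [|n IH]; intros La Lb' Ca Cb HLa HLb E.
  - destruct Ca as [Ca|Ca]; [|lia]. destruct Cb as [Cb|Cb]; [|lia]. congruence.
  - destruct (HLI La HLa) as (A1 & A2 & A3 & A4). destruct (HLI Lb' HLb) as (B1 & B2 & B3 & B4).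
    destruct (classic (La = L1)) as [Ea|Ea]; destruct (classic (Lb' = L1)) as [Eb|Eb].
    + congruence.
    + exfalso. destruct (B4 Eb) as (B5 & _). apply B5. rewrite <- E. auto.
    + exfalso. destruct (A4 Ea) as (A5 & _). apply A5. rewrite E. auto.
    + destruct (A4 Ea) as (_ & A6 & A7). destruct (B4 Eb) as (_ & B6 & B7).
      assert (Hfa : p2 (Psi La) = f (p1 La)) by (rewrite A6; exact A7).
      assert (Hfb : p2 (Psi Lb') = f (p1 Lb')) by (rewrite B6; exact B7).
      assert (Hf : f (p1 La) = f (p1 Lb')) by congruence.
      assert (Hda : d1 (p1 La) <= n) by (destruct Ca as [Ca|Ca]; [exfalso; exact (Ea Ca)|lia]).
      assert (Hdb : d1 (p1 Lb') <= n) by (destruct Cb as [Cb|Cb]; [exfalso; exact (Eb Cb)|lia]).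
      assert (Hpp : par1 (p1 La) = par1 (p1 Lb')).
      { apply IH.
        - eapply cov_mono; [apply cov_par|lia].
        - eapply cov_mono; [apply cov_par|lia].
        - apply par1_spec.
        - apply par1_spec.
        - rewrite !F_par. congruence. }
      assert (Hv : (p1 La) = (p1 Lb')).
      { destruct (par1_spec (p1 La)) as [P1 P2]. destruct (par1_spec (p1 Lb')) as [Q1 Q2].
        destruct (F_iso _ P1) as (_ & I2 & _). apply I2; auto. rewrite Hpp. auto.
        unfold fF in Hf. rewrite <- Hpp in Hf. exact Hf. }
      assert (Hch : forall L, lobe L -> L <> L1 -> ch1 (p1 L) L).
      { intros L HL HL1'. split; auto. split; [apply p1_spec; auto|]. intros Hpar.
        destruct (par1_ne (p1 L)) as [Hne _]; [rewrite <- Hpar; auto|]. apply Hne.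
        rewrite <- Hpar. auto. }
      destruct (HVI (p1 La)) as [I1 _]. apply (I1 La Lb').
      * apply Hch; auto.
      * rewrite Hv. apply Hch; auto.
      * exact E.
Qed.

Lemma F_pinj La Lb' : lobe La -> lobe Lb' -> Psi La = Psi Lb' -> La = Lb'.
Proof.
  intros. apply (F_pinj_n (S (Nat.max (d1 (p1 La)) (d1 (p1 Lb'))))); auto; right; lia.
Qed.

Lemma F_inj a b : f a = f b -> a = b.
Proof.
  intros E. assert (Hp : par1 a = par1 b).
  { apply F_pinj; try apply par1_spec. rewrite !F_par. congruence. }
  destruct (par1_spec a) as [P1 P2]. destruct (par1_spec b) as [Q1 Q2].
  destruct (F_iso _ P1) as (_ & I2 & _). apply I2; auto. rewrite Hp. auto.
  unfold fF in E. rewrite <- Hp in E. exact E.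
Qed.

Lemma F_psurj_n n : forall M, lobe M -> (M = L2 \/ d2 (p2 M) < n) -> exists L, lobe L /\ Psi L = M.
Proof.
  assert (H1 : Psi L1 = L2) by (destruct (HLI L1 HL1) as (_ & _ & C & _); auto).
  induction n as [|n IH]; intros M HM C.
  - destruct C as [->|C]; [exists L1; auto|lia].
  - destruct (classic (M = L2)) as [->|E]; [exists L1; auto|].
    destruct C as [C|C]; [contradiction|].
    set (m := p2 M) in *.
    destruct (par2_spec m) as [Q1 Q2].
    destruct (IH (par2 m) Q1) as (P & HP & HPsi).
    { destruct (classic (par2 m = L2)) as [E'|E']; [left; auto|right].
      destruct (par2_ne m E') as [_ D]. lia. }
    destruct (F_iso P HP) as (_ & _ & I3 & _).
    destruct (I3 m) as (u & Hu & Hum); [rewrite HPsi; auto|].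
    assert (HPu : P = par1 u).
    { destruct (classic (P = L1)) as [->|EP]; [symmetry; apply par1_R; auto|].
      apply NNPP. intros Hn. destruct (tc1 u P HP Hu Hn) as [_ Hpu].
      destruct (HLI P HP) as (_ & _ & _ & D). destruct (D EP) as (D1 & D2 & _).
      rewrite HPsi in D1, D2. destruct (par2_ne m D1) as [Hne _]. apply Hne.
      rewrite D2, Hpu. exact Hum. }
    assert (Hfu : f u = m) by (unfold fF; rewrite <- HPu; exact Hum).
    destruct (HVI u) as [_ I2]. destruct (I2 M) as (L & (HL & _) & HLM).
    + split; auto. rewrite Hfu. split; [apply p2_spec; auto|].
      intros EM. destruct (par2_ne m) as [Hne _]; [rewrite <- EM; auto|]. apply Hne.
      rewrite <- EM. reflexivity.
    + exists L. auto.
Qed.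

Lemma F_surj y : exists x, f x = y.
Proof.
  destruct (par2_spec y) as [Q1 Q2].
  destruct (F_psurj_n (S (d2 (p2 (par2 y)))) (par2 y) Q1) as (L & HL & E); [right; lia|].
  destruct (F_iso L HL) as (_ & _ & I3 & _). destruct (I3 y) as (x & Hx & Hxy); [rewrite E; auto|].
  exists x. rewrite <- (F_coh L x HL Hx). auto.
Qed.

Lemma F_adj a b : adj a b <-> adj (f a) (f b).
Proof.
  split.
  - intros H. destruct (lobeOf_lobe adj a b H) as [HL Hab].
    destruct (F_iso _ HL) as (_ & _ & _ & I4).
    assert (Ha : lv (lobeOf adj a b) a) by (exists b; auto).
    assert (Hb : lv (lobeOf adj a b) b) by (exists a; apply (lobe_sym adj Hsym); auto).
    apply (proj1 (I4 a b Ha Hb)) in Hab. rewrite !F_coh in Hab by auto.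
    eapply lobe_adj; [|exact Hab]. apply HLI; auto.
  - intros H. destruct (lobeOf_lobe adj (f a) (f b) H) as [HM Hab].
    destruct (F_loc (lobeOf adj (f a) (f b)) a HM) as (L & HL & HLa & E); [exists (f b); auto|].
    destruct (F_iso _ HL) as (_ & _ & I3 & I4).
    destruct (I3 (f b)) as (b' & Hb' & Eb').
    { rewrite E. exists (f a). apply (lobe_sym adj Hsym); auto. }
    rewrite (F_coh L b' HL Hb') in Eb'. apply F_inj in Eb'. subst b'.
    eapply lobe_adj; [exact HL|]. apply (I4 a b HLa Hb'). rewrite !F_coh by auto. rewrite E. exact Hab.
Qed.

Lemma F_final : exists g, is_aut V adj g /\ maps_lobe V g L1 L2.
Proof.
  exists f. split; [split; [exact F_surj|split; [exact F_inj|exact F_adj]]|].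
  assert (H1 : Psi L1 = L2) by (destruct (HLI L1 HL1) as (_ & _ & C & _); auto).
  destruct (F_iso L1 HL1) as (I1 & I2 & I3 & I4). rewrite H1 in I1, I3, I4.
  intros x y. split.
  - intros H. assert (Hx : lv L1 x) by (exists y; auto).
    assert (Hy : lv L1 y) by (exists x; apply (lobe_sym adj Hsym); auto).
    rewrite <- (F_coh L1 x), <- (F_coh L1 y) by auto. apply I4; auto.
  - intros H. destruct (F_loc L2 x HL2) as (L & HL & HLx & E); [exists (f y); auto|].
    assert (L = L1) by (apply F_pinj; auto; congruence). subst L.
    destruct (I3 (f y)) as (y' & Hy' & Ey').
    { exists (f x). apply (lobe_sym adj Hsym); auto. }
    rewrite (F_coh L1 y' HL1 Hy') in Ey'. apply F_inj in Ey'. subst y'.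
    apply (I4 x y HLx Hy'). rewrite !F_coh by auto. exact H.
Qed.

End Final.


Lemma stages : exists st : nat -> (Lb -> Lb) * (Lb -> V -> V), forall n,
  Inv n (fst (st n)) (snd (st n)) /\
  agree n (fst (st n)) (snd (st n)) (fst (st (S n))) (snd (st (S n))).
Proof.
  destruct (choice_fun (fun (p : nat * ((Lb -> Lb) * (Lb -> V -> V))) (q : (Lb -> Lb) * (Lb -> V -> V)) =>
     Inv (fst p) (fst (snd p)) (snd (snd p)) ->
     agree (fst p) (fst (snd p)) (snd (snd p)) (fst q) (snd q) /\ Inv (S (fst p)) (fst q) (snd q)))
    as (Sf & HS).
  { intros [n [Psi G]]. simpl. destruct (classic (Inv n Psi G)) as [H|H].
    - destruct (Step n Psi G H) as (Psi' & G' & H1 & H2). exists (Psi', G'). simpl. auto.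
    - exists (Psi, G). tauto. }
  exists (nat_rect (fun _ => ((Lb -> Lb) * (Lb -> V -> V))%type) ((fun _ => L2), (fun _ x => x))
            (fun n F => Sf (n, F))).
  assert (HI : forall n, Inv n (fst (nat_rect (fun _ => ((Lb -> Lb) * (Lb -> V -> V))%type) ((fun _ => L2), (fun _ x => x))
            (fun n F => Sf (n, F)) n)) (snd (nat_rect (fun _ => ((Lb -> Lb) * (Lb -> V -> V))%type) ((fun _ => L2), (fun _ x => x))
            (fun n F => Sf (n, F)) n))).
  { induction n as [|n IH]; [apply Inv0|]. simpl. apply (HS (n, _) IH). }
  intros n. split; auto. simpl. apply (HS (n, _) (HI n)).
Qed.

Lemma backward_main : exists g, is_aut V adj g /\ maps_lobe V g L1 L2.
Proof.
  destruct stages as (st & Hst).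
  assert (Hag : forall n m, n <= m -> agree n (fst (st n)) (snd (st n)) (fst (st m)) (snd (st m))).
  { intros n m Hnm. induction Hnm as [|m Hnm IH].
    - intros L _. auto.
    - intros L HL. destruct (IH L HL) as [E1 E2]. destruct (proj2 (Hst m) L) as [E3 E4].
      + eapply cov_mono; eauto.
      + split; congruence. }
  set (PsiF := fun L => fst (st (S (d1 (p1 L)))) L).
  set (GF := fun L => snd (st (S (d1 (p1 L)))) L).
  assert (Eq : forall L n, cov n L -> PsiF L = fst (st n) L /\ GF L = snd (st n) L).
  { intros L n Hc. unfold PsiF, GF. destruct (Nat.le_ge_cases n (S (d1 (p1 L)))) as [H|H].
    - destruct (Hag n _ H L Hc). auto.
    - destruct (Hag _ n H L) as [E1 E2]; [right; lia|]. auto. }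
  apply (F_final PsiF GF).
  - intros L HL. set (n := S (d1 (p1 L))).
    assert (Hc : cov n L) by (right; unfold n; lia).
    destruct (Eq L n Hc) as [E1 E2].
    apply (LI_agree (fst (st n)) (snd (st n))); auto.
    + apply (proj1 (proj1 (Hst n))); auto.
    + intros HL1'. assert (Hcp : cov n (par1 (p1 L))) by (eapply cov_mono; [apply cov_par|unfold n; lia]).
      destruct (Eq _ n Hcp). auto.
  - intros v. set (n := S (d1 v)).
    apply (VI_agree (fst (st n)) (snd (st n))).
    + apply (proj2 (proj1 (Hst n))). unfold n; lia.
    + intros L HL. destruct (ch1_cov v L HL) as [_ Hp]. symmetry. apply Eq. right. rewrite Hp. unfold n. lia.
    + symmetry. apply Eq. eapply cov_mono; [apply cov_par|unfold n; lia].
    + symmetry. apply Eq. eapply cov_mono; [apply cov_par|unfold n; lia].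
Qed.

End Backward.


Theorem theorem3p2 (V : Type) (adj : V -> V -> Prop)
  (Hsimple : simple_graph V adj) (Hconn : connected V adj)
  (Hcount : countable_vertices V) (Hcut : has_cut_vertex V adj)
  (L0 : V -> V -> Prop) (HL0 : is_lobe V adj L0) :
  lobe_transitive V adj <->
  exists sigma : (V -> V -> Prop) -> V -> V,
    (forall L, is_lobe V adj L -> lobe_iso V L0 L (sigma L)) /\
    (forall q, lobe_vertex V L0 q ->
       (forall u w, aut_orbit V adj u w ->
          equinumerous (tau_set adj L0 sigma q u) (tau_set adj L0 sigma q w)) /\
       (forall v, (exists L, tau_set adj L0 sigma q v L) <->
                  aut_orbit V adj q v)).
Proof.
  destruct Hsimple as [Hsym Hirr]. split.
  - intros Hlt. apply forward_dir; auto.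
  - intros (sigma & Hs & Hq) L1 L2 HL1 HL2.
    apply (backward_main adj Hsym Hirr Hconn L0 sigma Hs); auto.
    + intros q Hq' u w Huw. apply (proj1 (Hq q Hq')); auto.
    + intros q Hq' v. apply (proj2 (Hq q Hq')).
Qed.
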